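(* Let $\mathcal{T}$ be a simplicial tree and $G \leq \mathrm{Aut}(\mathcal{T})$. Suppose that the action of $G$ on $\mathcal{T}$ is minimal and of general type, and that the action of $G$ on $\partial \mathcal{T}$ is not topologically free. Then $G$ satisfies a non-trivial mixed identity.
   Context: The action of $G$ on $\mathcal{T}$ is minimal if there is no proper $G$-invariant subtree, and of general type if $G$ contains two hyperbolic elements (elements acting as non-trivial translations along a bi-infinite geodesic) whose axes have no common endpoint. $\partial\mathcal{T}$ is the space of ends with its usual topology; the action on $\partial\mathcal{T}$ is topologically free if the fixed point set of every non-trivial element has empty interior. For $w \in G \ast \mathbb{Z}$, $G$ satisfies the mixed identity $w=1$ if every homomorphism $G \ast \mathbb{Z} \to G$ restricting to the identity on $G$ sends $w$ to $1$; it is non-trivial if $w \neq 1$ in $G \ast \mathbb{Z}$. *)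

(* Defs.v *)
From Stdlib Require Import ZArith List Arith.
Open Scope Z_scope.

Section Trees.
Variable V : Type.
Variable adj : V -> V -> Prop.

Definition walk_in (P : V -> Prop) (a b : V) : Prop :=
  exists (n : nat) (p : nat -> V), p 0%nat = a /\ p n = b /\
    (forall i, (i < n)%nat -> adj (p i) (p (S i))) /\
    (forall i, (i <= n)%nat -> P (p i)).

Definition is_tree : Prop :=
  inhabited V /\
  (forall u v, adj u v -> adj v u) /\
  (forall v, ~ adj v v) /\
  (forall u v, walk_in (fun _ => True) u v) /\
  (forall (n : nat) (p : nat -> V), (1 <= n)%nat -> p 0%nat = p n ->
     (forall i, (i < n)%nat -> adj (p i) (p (S i))) ->
     exists i, (i + 2 <= n)%nat /\ p i = p (i + 2)%nat).

Definition is_aut (f : V -> V) : Prop :=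
  (forall u v, adj u v <-> adj (f u) (f v)) /\
  (forall u v, f u = f v -> u = v) /\ (forall v, exists u, f u = v).

Definition nontriv (f : V -> V) : Prop := exists v, f v <> v.

Definition is_aut_subgroup (G : (V -> V) -> Prop) : Prop :=
  (forall g, G g -> is_aut g) /\
  G (fun v => v) /\
  (forall g h, G g -> G h -> G (fun v => g (h v))) /\
  (forall g, G g -> exists h, G h /\ forall v, h (g v) = v /\ g (h v) = v).

Definition is_subtree (S : V -> Prop) : Prop :=
  (exists v, S v) /\ (forall u v, S u -> S v -> walk_in S u v).

Definition minimal_action (G : (V -> V) -> Prop) : Prop :=
  ~ exists S : V -> Prop, is_subtree S /\
      (forall g v, G g -> S v -> S (g v)) /\ (exists v, ~ S v).

Definition is_ray (r : nat -> V) : Prop :=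
  (forall n, adj (r n) (r (S n))) /\ (forall m n, r m = r n -> m = n).

(* two rays define the same end iff they eventually coincide up to shift *)
Definition ray_equiv (r r' : nat -> V) : Prop :=
  exists a b : nat, forall n, r (a + n)%nat = r' (b + n)%nat.

Definition is_line (c : Z -> V) : Prop :=
  (forall n, adj (c n) (c (n + 1))) /\ (forall m n, c m = c n -> m = n).

Definition line_plus (c : Z -> V) : nat -> V := fun n => c (Z.of_nat n).
Definition line_minus (c : Z -> V) : nat -> V := fun n => c (- Z.of_nat n).

Definition is_axis (g : V -> V) (c : Z -> V) : Prop :=
  is_line c /\ exists k : Z, k <> 0 /\ forall n, g (c n) = c (n + k).

Definition hyperbolic (g : V -> V) : Prop := exists c, is_axis g c.

Definition general_type (G : (V -> V) -> Prop) : Prop :=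
  exists g1 g2 c1 c2, G g1 /\ G g2 /\ is_axis g1 c1 /\ is_axis g2 c2 /\
    forall e1 e2, (e1 = line_plus c1 \/ e1 = line_minus c1) ->
                  (e2 = line_plus c2 \/ e2 = line_minus c2) ->
                  ~ ray_equiv e1 e2.

(* topology on the space of ends: the basic neighbourhoods of the end of r are,
   for each vertex v, the ends lying in the same component of T - v as r. *)
Definition same_comp_end (v : V) (r r' : nat -> V) : Prop :=
  exists m n : nat,
    (forall k, (m <= k)%nat -> r k <> v) /\
    (forall k, (n <= k)%nat -> r' k <> v) /\
    walk_in (fun x => x <> v) (r m) (r' n).

Definition ends_open (U : (nat -> V) -> Prop) : Prop :=
  forall r, is_ray r -> U r -> exists v,
    forall r', is_ray r' -> same_comp_end v r r' -> U r'.

Definition fixes_end (g : V -> V) (r : nat -> V) : Prop :=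
  ray_equiv (fun n => g (r n)) r.

Definition fix_has_interior (g : V -> V) : Prop :=
  exists U : (nat -> V) -> Prop, ends_open U /\
    (exists r, is_ray r /\ U r) /\
    (forall r, is_ray r -> U r -> fixes_end g r).

Definition topologically_free (G : (V -> V) -> Prop) : Prop :=
  forall g, G g -> nontriv g -> ~ fix_has_interior g.

(* mixed identities: elements of G * Z in normal form
   g0 x^{n1} g1 x^{n2} ... x^{nk} gk, with all ni <> 0 and g1..g(k-1) <> 1.
   Represented as g0 and the list [(n1,g1); ...; (nk,gk)]. *)
Definition zpow (h hi : V -> V) (n : Z) (v : V) : V :=
  if (0 <=? n) then Nat.iter (Z.to_nat n) h v else Nat.iter (Z.to_nat (- n)) hi v.

Fixpoint eval_tail (h hi : V -> V) (l : list (Z * (V -> V))) (v : V) : V :=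
  match l with
  | nil => v
  | (n, g) :: t => zpow h hi n (g (eval_tail h hi t v))
  end.

(* image of the word under the homomorphism G*Z -> G that is the identity on G
   and sends the generator x to h (hi = h^-1) *)
Definition eval_word (h hi : V -> V) (g0 : V -> V) (l : list (Z * (V -> V)))
  (v : V) : V := g0 (eval_tail h hi l v).

Fixpoint reduced_tail (l : list (Z * (V -> V))) : Prop :=
  match l with
  | nil => True
  | (n, g) :: nil => n <> 0
  | (n, g) :: t => n <> 0 /\ nontriv g /\ reduced_tail t
  end.

Definition satisfies_nontrivial_mixed_identity (G : (V -> V) -> Prop) : Prop :=
  exists (g0 : V -> V) (l : list (Z * (V -> V))),
    G g0 /\ (forall p, In p l -> G (snd p)) /\ reduced_tail l /\
    (l <> nil \/ nontriv g0) /\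
    forall h hi, G h -> G hi -> (forall v, h (hi v) = v /\ hi (h v) = v) ->
      forall v, eval_word h hi g0 l v = v.

End Trees.

(* Main.v *)
Require Import Defs.
From Stdlib Require Import ZArith List Lia Classical ClassicalEpsilon FunctionalExtensionality.
Import ListNotations.
Open Scope nat_scope.

Definition cm {V : Type} (a a' b b' : V -> V) : V -> V := fun v => a (b (a' (b' v))).
Definition cj {V : Type} (t t' a : V -> V) : V -> V := fun v => t (a (t' v)).
Definition inv2 {V : Type} (a a' : V -> V) := forall z, a (a' z) = z /\ a' (a z) = z.
Definition comm {V : Type} (a b : V -> V) := forall z, a (b z) = b (a z).

Lemma inv2_cm {V : Type} (a a' b b' : V -> V) : inv2 a a' -> inv2 b b' -> inv2 (cm a a' b b') (cm b b' a a').
Proof.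
  intros Ha Hb z. unfold cm. split.
  - rewrite (proj2 (Hb _)), (proj2 (Ha _)), (proj1 (Hb _)), (proj1 (Ha _)). auto.
  - rewrite (proj2 (Ha _)), (proj2 (Hb _)), (proj1 (Ha _)), (proj1 (Hb _)). auto.
Qed.

Lemma inv2_cj {V : Type} (t t' a a' : V -> V) : inv2 t t' -> inv2 a a' -> inv2 (cj t t' a) (cj t t' a').
Proof.
  intros Ht Ha z. unfold cj. split.
  - rewrite (proj2 (Ht _)), (proj1 (Ha _)), (proj1 (Ht _)). auto.
  - rewrite (proj2 (Ht _)), (proj2 (Ha _)), (proj1 (Ht _)). auto.
Qed.

Lemma cm_l {V : Type} (a a' b b' : V -> V) : (forall z, a z = z) -> inv2 a a' -> inv2 b b' -> forall z, cm a a' b b' z = z.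
Proof.
  intros H Ha Hb z. unfold cm. rewrite H.
  assert (E : forall w, a' w = w) by (intros w; rewrite <- (H (a' w)); apply Ha).
  rewrite E. apply Hb.
Qed.

Lemma cm_r {V : Type} (a a' b b' : V -> V) : (forall z, b z = z) -> inv2 a a' -> inv2 b b' -> forall z, cm a a' b b' z = z.
Proof.
  intros H Ha Hb z. unfold cm.
  assert (E : forall w, b' w = w) by (intros w; rewrite <- (H (b' w)); apply Hb).
  rewrite E, H. apply Ha.
Qed.

Lemma cm_comm {V : Type} (a a' b b' : V -> V) : comm a b -> inv2 a a' -> inv2 b b' -> forall z, cm a a' b b' z = z.
Proof.
  intros H Ha Hb z. unfold cm. rewrite H. rewrite (proj1 (Ha _)). apply Hb.
Qed.

Lemma cj_id {V : Type} (t t' a : V -> V) : (forall z, a z = z) -> inv2 t t' -> forall z, cj t t' a z = z.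
Proof. intros H Ht z. unfold cj. rewrite H. apply Ht. Qed.

Section Words.
Variable V : Type.
Variables F1 F1' F2 F2' T T' S S' : V -> V.

Definition cc (h hi Fi Fi' Fj Fj' : V -> V) := cm Fi Fi' (cj h hi Fj) (cj h hi Fj').
Definition cc' (h hi Fi Fi' Fj Fj' : V -> V) := cm (cj h hi Fj) (cj h hi Fj') Fi Fi'.
Definition uu (h hi Fi Fi' : V -> V) :=
  cm (cc h hi Fi Fi' F1 F1') (cc' h hi Fi Fi' F1 F1') (cj T T' (cc h hi Fi Fi' F2 F2')) (cj T T' (cc' h hi Fi Fi' F2 F2')).
Definition uu' (h hi Fi Fi' : V -> V) :=
  cm (cj T T' (cc h hi Fi Fi' F2 F2')) (cj T T' (cc' h hi Fi Fi' F2 F2')) (cc h hi Fi Fi' F1 F1') (cc' h hi Fi Fi' F1 F1').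
Definition Wd (h hi : V -> V) :=
  cm (uu h hi F1 F1') (uu' h hi F1 F1') (cj S S' (uu h hi F2 F2')) (cj S S' (uu' h hi F2 F2')).

Definition wl : list (Z * (V -> V)) :=
  [(1%Z, (fun w => F1 (w)));
  ((-1)%Z, (fun w => F1' (w)));
  (1%Z, (fun w => F1' (w)));
  ((-1)%Z, (fun w => T (F1 (w))));
  (1%Z, (fun w => F2 (w)));
  ((-1)%Z, (fun w => F1' (w)));
  (1%Z, (fun w => F2' (w)));
  ((-1)%Z, (fun w => T' (w)));
  (1%Z, (fun w => F1 (w)));
  ((-1)%Z, (fun w => F1 (w)));
  (1%Z, (fun w => F1' (w)));
  ((-1)%Z, (fun w => F1' (T (w))));
  (1%Z, (fun w => F2 (w)));
  ((-1)%Z, (fun w => F1 (w)));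
  (1%Z, (fun w => F2' (w)));
  ((-1)%Z, (fun w => F1' (T' (S (F2 (w))))));
  (1%Z, (fun w => F1 (w)));
  ((-1)%Z, (fun w => F2' (w)));
  (1%Z, (fun w => F1' (w)));
  ((-1)%Z, (fun w => T (F2 (w))));
  (1%Z, (fun w => F2 (w)));
  ((-1)%Z, (fun w => F2' (w)));
  (1%Z, (fun w => F2' (w)));
  ((-1)%Z, (fun w => T' (w)));
  (1%Z, (fun w => F1 (w)));
  ((-1)%Z, (fun w => F2 (w)));
  (1%Z, (fun w => F1' (w)));
  ((-1)%Z, (fun w => F2' (T (w))));
  (1%Z, (fun w => F2 (w)));
  ((-1)%Z, (fun w => F2 (w)));
  (1%Z, (fun w => F2' (w)));
  ((-1)%Z, (fun w => F2' (T' (S' (T (F1 (w)))))));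
  (1%Z, (fun w => F2 (w)));
  ((-1)%Z, (fun w => F1' (w)));
  (1%Z, (fun w => F2' (w)));
  ((-1)%Z, (fun w => T' (F1 (w))));
  (1%Z, (fun w => F1 (w)));
  ((-1)%Z, (fun w => F1' (w)));
  (1%Z, (fun w => F1' (w)));
  ((-1)%Z, (fun w => T (w)));
  (1%Z, (fun w => F2 (w)));
  ((-1)%Z, (fun w => F1 (w)));
  (1%Z, (fun w => F2' (w)));
  ((-1)%Z, (fun w => F1' (T' (w))));
  (1%Z, (fun w => F1 (w)));
  ((-1)%Z, (fun w => F1 (w)));
  (1%Z, (fun w => F1' (w)));
  ((-1)%Z, (fun w => F1' (S (T (F2 (w))))));
  (1%Z, (fun w => F2 (w)));
  ((-1)%Z, (fun w => F2' (w)));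
  (1%Z, (fun w => F2' (w)));
  ((-1)%Z, (fun w => T' (F2 (w))));
  (1%Z, (fun w => F1 (w)));
  ((-1)%Z, (fun w => F2' (w)));
  (1%Z, (fun w => F1' (w)));
  ((-1)%Z, (fun w => T (w)));
  (1%Z, (fun w => F2 (w)));
  ((-1)%Z, (fun w => F2 (w)));
  (1%Z, (fun w => F2' (w)));
  ((-1)%Z, (fun w => F2' (T' (w))));
  (1%Z, (fun w => F1 (w)));
  ((-1)%Z, (fun w => F2 (w)));
  (1%Z, (fun w => F1' (w)));
  ((-1)%Z, (fun w => F2' (S' (w))))].

Lemma eval_wl h hi v : eval_word V h hi F1 wl v = Wd h hi v.
Proof. reflexivity. Qed.

Ltac tw := first [ assumption | apply inv2_cm; tw | apply inv2_cj; tw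
  | apply cj_id; tw | apply cm_comm; tw | apply cm_l; tw | apply cm_r; tw ].

Lemma Wd_id h hi : inv2 F1 F1' -> inv2 F2 F2' -> inv2 T T' -> inv2 S S' -> inv2 h hi ->
  (comm F1 (cj h hi F1) \/ comm F1 (cj h hi F2) \/ comm F2 (cj h hi F1) \/ comm F2 (cj h hi F2)) ->
  forall v, Wd h hi v = v.
Proof.
  intros I1 I2 IT IS Ih Hc.
  assert (IX : forall a a', inv2 a a' -> inv2 (cj h hi a) (cj h hi a')) by (intros; apply inv2_cj; auto).
  assert (Icc : forall a a' b b', inv2 a a' -> inv2 b b' -> inv2 (cc h hi a a' b b') (cc' h hi a a' b b')).
  { intros. unfold cc, cc'. apply inv2_cm; auto. }
  assert (Iuu : forall a a', inv2 a a' -> inv2 (uu h hi a a') (uu' h hi a a')).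
  { intros. unfold uu, uu'. apply inv2_cm; auto. apply inv2_cj; auto. }
  unfold Wd, uu, uu', cc, cc' in *.
  destruct Hc as [Hc|[Hc|[Hc|Hc]]]; tw.
Qed.

Ltac solve_in HC := first [assumption | apply HC; solve_in HC].
Lemma wl_in (P : (V -> V) -> Prop) : (forall g h, P g -> P h -> P (fun v => g (h v))) ->
  P F1 -> P F1' -> P F2 -> P F2' -> P T -> P T' -> P S -> P S' ->
  forall p, In p wl -> P (snd p).
Proof.
  intros HC H1 H2 H3 H4 H5 H6 H7 H8 p Hp. unfold wl in Hp.
  repeat (destruct Hp as [Hp|Hp]; [subst p; simpl; solve_in HC|]). destruct Hp.
Qed.

Lemma wl_reduced (l : Z -> V) (K : Z) : (K > 0)%Z -> (forall m n, l m = l n -> m = n) ->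
  (forall n, F1 (l n) = l n) -> (forall n, F1' (l n) = l n) ->
  (forall n, F2 (l n) = l n) -> (forall n, F2' (l n) = l n) ->
  (forall n, T (l n) = l (n + K)%Z) -> (forall n, T' (l n) = l (n - K)%Z) ->
  (forall n, S (l n) = l (n + 2 * K)%Z) -> (forall n, S' (l n) = l (n - 2 * K)%Z) ->
  nontriv V F1 -> nontriv V F1' -> nontriv V F2 -> nontriv V F2' ->
  reduced_tail V wl.
Proof.
  intros HK Hl E1 E2 E3 E4 E5 E6 E7 E8 N1 N2 N3 N4.
  unfold wl. simpl.
  repeat split; try discriminate;
  first [ exact N1 | exact N2 | exact N3 | exact N4 |
    (exists (l 0%Z); repeat (first [rewrite E1 | rewrite E2 | rewrite E3 | rewrite E4 | rewrite E5
       | rewrite E6 | rewrite E7 | rewrite E8]);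
     intros X; apply Hl in X; lia) ].
Qed.

End Words.


Definition meets {V : Type} (X Y : V -> Prop) := exists z, X z /\ Y z.
Definition tri {V : Type} (X Y : V -> Prop) :=
  (forall z, X z -> Y z) \/ (forall z, Y z -> X z) \/ (forall z, X z \/ Y z).

Lemma comb {V : Type} (A1 A2 B1 B2 : V -> Prop) :
  (meets A1 B1 -> tri A1 B1) -> (meets A1 B2 -> tri A1 B2) ->
  (meets A2 B1 -> tri A2 B1) -> (meets A2 B2 -> tri A2 B2) ->
  (exists z, B1 z) -> (exists z, B2 z) -> (forall z, ~ (A1 z /\ A2 z)) ->
  (forall z, ~ (B1 z /\ B2 z)) -> (exists z, ~ B1 z /\ ~ B2 z) ->
  ~ meets A1 B1 \/ ~ meets A1 B2 \/ ~ meets A2 B1 \/ ~ meets A2 B2.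
Proof.
  intros T11 T12 T21 T22 [b1 Hb1] [b2 Hb2] DA DB [z0 [Z1 Z2]].
  apply NNPP. intros N.
  assert (M11 : meets A1 B1) by (apply NNPP; tauto).
  assert (M12 : meets A1 B2) by (apply NNPP; tauto).
  assert (M21 : meets A2 B1) by (apply NNPP; tauto).
  assert (M22 : meets A2 B2) by (apply NNPP; tauto).
  assert (R : forall (X Y Y' : V -> Prop), (meets X Y -> tri X Y) -> meets X Y -> meets X Y' ->
             (forall z, ~ (Y z /\ Y' z)) -> (forall z, Y z -> X z) \/ (forall z, X z \/ Y z)).
  { intros X Y Y' T M M' D. destruct (T M) as [H|[H|H]]; auto.
    exfalso. destruct M' as [w [W1 W2]]. apply (D w). auto. }
  assert (HJ : forall (B B' : V -> Prop) b b', B b -> B' b' -> ~ B b' ->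
     ((forall z, B z -> A1 z) \/ (forall z, A1 z \/ B z)) ->
     ((forall z, B z -> A2 z) \/ (forall z, A2 z \/ B z)) ->
     ((forall z, B z -> A1 z) /\ (forall z, A2 z \/ B z)) \/ ((forall z, B z -> A2 z) /\ (forall z, A1 z \/ B z))).
  { intros B B' b b' Hb Hb' Nb [X1|X1] [X2|X2].
    - exfalso. apply (DA b). auto.
    - left; auto.
    - right; auto.
    - exfalso. apply (DA b'). destruct (X1 b'); destruct (X2 b'); tauto. }
  assert (C1 := HJ B1 B2 b1 b2 Hb1 Hb2 (fun X => DB b2 (conj X Hb2))
    (R A1 B1 B2 T11 M11 M12 DB) (R A2 B1 B2 T21 M21 M22 DB)).
  assert (DB' : forall z, ~ (B2 z /\ B1 z)) by (intros z [X Y]; apply (DB z); auto).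
  assert (C2 := HJ B2 B1 b2 b1 Hb2 Hb1 (fun X => DB b1 (conj Hb1 X))
    (R A1 B2 B1 T12 M12 M11 DB') (R A2 B2 B1 T22 M22 M21 DB')).
  destruct C1 as [[P1 Q1]|[P1 Q1]]; destruct C2 as [[P2 Q2]|[P2 Q2]].
  - apply (DA b2). split; auto. destruct (Q1 b2); auto. exfalso; apply (DB b2); auto.
  - apply (DA z0). destruct (Q1 z0); destruct (Q2 z0); tauto.
  - apply (DA z0). destruct (Q1 z0); destruct (Q2 z0); tauto.
  - apply (DA b2). split; auto. destruct (Q1 b2); auto. exfalso; apply (DB b2); auto.
Qed.

Lemma comm_disj {V : Type} (f k : V -> V) (P Q : V -> Prop) :
  (forall z, ~ P z -> f z = z) -> (forall z, ~ Q z -> k z = z) -> (forall z, ~ (P z /\ Q z)) ->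
  (forall u v, f u = f v -> u = v) -> (forall u v, k u = k v -> u = v) -> comm f k.
Proof.
  intros Hf Hk D If Ik z.
  destruct (classic (P z)) as [Pz|Pz].
  - assert (Kz : k z = z) by (apply Hk; intros X; apply (D z); auto).
    assert (Pfz : P (f z)). { apply NNPP. intros X. pose proof (Hf _ X) as E. apply If in E. rewrite E in X. auto. }
    rewrite Kz. rewrite (Hk (f z)); auto. intros X; apply (D (f z)); auto.
  - rewrite (Hf z Pz). destruct (classic (Q z)) as [Qz|Qz].
    + assert (Qkz : Q (k z)). { apply NNPP. intros X. pose proof (Hk _ X) as E. apply Ik in E. rewrite E in X. auto. }
      apply Hf. intros X; apply (D (k z)); auto.
    + rewrite (Hk z Qz). apply Hf; auto.
Qed.

Section Tree.
Variable V : Type.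
Variable adj : V -> V -> Prop.
Hypothesis adj_sym : forall u v, adj u v -> adj v u.
Hypothesis adj_irr : forall v, ~ adj v v.
Hypothesis conn : forall u v, walk_in V adj (fun _ => True) u v.
Hypothesis acyc : forall (n : nat) (p : nat -> V), (1 <= n)%nat -> p 0%nat = p n ->
     (forall i, (i < n)%nat -> adj (p i) (p (S i))) ->
     exists i, (i + 2 <= n)%nat /\ p i = p (i + 2)%nat.

Definition Wk (n : nat) (p : nat -> V) := forall i, i < n -> adj (p i) (p (S i)).
Definition NB (n : nat) (p : nat -> V) := forall i, i + 2 <= n -> p i <> p (i+2).
Definition RP n p a b := p 0 = a /\ p n = b /\ Wk n p /\ NB n p.

Lemma no_cycle n p : Wk n p -> NB n p -> p 0 = p n -> n = 0.
Proof.
  intros HW HN He. destruct n as [|n]; auto. exfalso.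
  destruct (acyc (S n) p) as [i [Hi Hq]]; try lia; auto.
  apply (HN i Hi Hq).
Qed.

Definition shift (p : nat -> V) : nat -> V := fun i => p (S i).
Definition revp (n : nat) (p : nat -> V) : nat -> V := fun i => p (n - i).
Definition glue (n : nat) (p q : nat -> V) : nat -> V :=
  fun i => if i <=? n then p i else q (i - n).

Lemma rp_uniq : forall n p m q a b, RP n p a b -> RP m q a b ->
  n = m /\ forall i, i <= n -> p i = q i.
Proof.
  induction n as [|n IH]; intros p m q a b [Hp0 [Hpn [HpW HpN]]] [Hq0 [Hqm [HqW HqN]]].
  - assert (m = 0). { apply (no_cycle m q); auto; congruence. }
    subst. split; auto. intros i Hi. assert (i = 0) by lia. subst. congruence.
  - destruct m as [|m].
    + exfalso. assert (S n = 0); [|lia]. apply (no_cycle (S n) p); auto; congruence.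
    + destruct (classic (p 1 = q 1)) as [E|E].
      * destruct (IH (shift p) m (shift q) (p 1) b) as [H1 H2].
        { unfold shift; repeat split; auto. intros i Hi; apply HpW; lia.
          intros i Hi; apply HpN; lia. }
        { unfold shift; repeat split; auto. intros i Hi; apply HqW; lia.
          intros i Hi; apply HqN; lia. }
        split; [lia|]. intros [|i] Hi; [congruence|]. apply (H2 i); lia.
      * exfalso.
        set (r := glue (S n) (revp (S n) p) q).
        assert (Hr: S n + S m = 0).
        { apply (no_cycle _ r).
          - intros i Hi. unfold r, glue, revp.
            destruct (Nat.leb_spec i (S n)); destruct (Nat.leb_spec (S i) (S n)); try lia.
            + apply adj_sym. replace (S n - i) with (S (S n - S i)) by lia. apply HpW; lia.
            + assert (i = S n) by lia. subst i. replace (S n - S n) with 0 by lia.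
              replace (S (S n) - S n) with 1 by lia. rewrite Hp0, <- Hq0. apply HqW; lia.
            + replace (S i - S n) with (S (i - S n)) by lia. apply HqW; lia.
          - intros i Hi. unfold r, glue, revp.
            destruct (Nat.leb_spec i (S n)); destruct (Nat.leb_spec (i+2) (S n)); try lia.
            + replace (S n - i) with ((S n - (i+2)) + 2) by lia. intro X; symmetry in X; revert X; apply HpN; lia.
            + destruct (Nat.eq_dec i n).
              * subst i. replace (S n - n) with 1 by lia. replace (n + 2 - S n) with 1 by lia. auto.
              * assert (i = S n) by lia. subst i. replace (S n - S n) with 0 by lia.
                replace (S n + 2 - S n) with 2 by lia. rewrite Hp0, <- Hq0. apply HqN; lia.
            + replace (i + 2 - S n) with ((i - S n) + 2) by lia. apply HqN; lia.
          - unfold r, glue, revp.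
            destruct (Nat.leb_spec 0 (S n)); try lia.
            destruct (Nat.leb_spec (S n + S m) (S n)); try lia.
            replace (S n - 0) with (S n) by lia. replace (S n + S m - S n) with (S m) by lia.
            congruence. }
        lia.
Qed.

Definition consf (x : V) (p : nat -> V) : nat -> V :=
  fun i => match i with 0 => x | S j => p j end.

Lemma RP_shift n p a b : RP (S n) p a b -> RP n (shift p) (p 1) b.
Proof.
  intros [H0 [H1 [HW HN]]]. unfold shift; repeat split; auto.
  intros i Hi; apply HW; lia. intros i Hi; apply HN; lia.
Qed.

Lemma RP_cons n p a b x : RP n p a b -> adj x a -> (1 <= n -> x <> p 1) ->
  RP (S n) (consf x p) x b.
Proof.
  intros [H0 [H1 [HW HN]]] Ha Hx. unfold consf; repeat split; auto.
  - intros [|i] Hi; [congruence|]. apply HW; lia.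
  - intros [|i] Hi. simpl. apply Hx; lia. simpl.
    replace (S (S i)) with (i + 2) by lia. apply HN; lia.
Qed.

Lemma ex_rp_walk : forall n p, Wk n p -> exists m q, RP m q (p 0) (p n).
Proof.
  induction n as [|n IH]; intros p HW.
  - exists 0, p. repeat split; auto; intros i Hi; lia.
  - destruct (IH (shift p)) as [m [q Hq]].
    { intros i Hi. apply HW. lia. }
    unfold shift in Hq.
    destruct (classic (1 <= m /\ q 1 = p 0)) as [[Hm E]|E].
    + destruct m as [|m]; [lia|]. exists m, (shift q).
      pose proof (RP_shift m q _ _ Hq) as Hq2. unfold shift in Hq2 at 1. rewrite E in Hq2. exact Hq2.
    + exists (S m), (consf (p 0) q). apply (RP_cons m q (p 1) (p (S n))); auto.
      apply HW. lia.
Qed.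

Lemma ex_rp a b : exists np : nat * (nat -> V), RP (fst np) (snd np) a b.
Proof.
  destruct (conn a b) as [n [p [H0 [H1 [HW _]]]]].
  destruct (ex_rp_walk n p HW) as [m [q Hq]]. exists (m, q). simpl. congruence.
Qed.

Definition geo (a b : V) : nat * (nat -> V) :=
  proj1_sig (constructive_indefinite_description _ (ex_rp a b)).
Definition gl a b := fst (geo a b).
Definition gp a b := snd (geo a b).

Lemma geo_RP a b : RP (gl a b) (gp a b) a b.
Proof. unfold gl, gp, geo. destruct (constructive_indefinite_description _ _). simpl. auto. Qed.

Lemma geo_uniq n p a b : RP n p a b -> n = gl a b /\ forall i, i <= n -> p i = gp a b i.
Proof. intros H. eapply rp_uniq; eauto. apply geo_RP. Qed.

Lemma RP_rev n p a b : RP n p a b -> RP n (revp n p) b a.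
Proof.
  intros [H0 [H1 [HW HN]]]. unfold revp; repeat split.
  - rewrite Nat.sub_0_r; auto.
  - rewrite Nat.sub_diag; auto.
  - intros i Hi. apply adj_sym. replace (n - i) with (S (n - S i)) by lia. apply HW; lia.
  - intros i Hi. replace (n - i) with ((n - (i+2)) + 2) by lia.
    intro X; symmetry in X; revert X; apply HN; lia.
Qed.

Lemma RP_sub n p a b i j : RP n p a b -> i <= j -> j <= n ->
  RP (j - i) (fun t => p (i + t)) (p i) (p j).
Proof.
  intros [H0 [H1 [HW HN]]] Hij Hjn. repeat split.
  - f_equal; lia.
  - f_equal; lia.
  - intros t Ht. replace (i + S t) with (S (i + t)) by lia. apply HW; lia.
  - intros t Ht. replace (i + (t+2)) with ((i + t) + 2) by lia. apply HN; lia.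
Qed.

Lemma RP_prefix n p a b k : RP n p a b -> k <= n -> RP k p a (p k).
Proof.
  intros H Hk. pose proof (RP_sub n p a b 0 k H (Nat.le_0_l _) Hk) as X.
  destruct H as [H0 _]. rewrite Nat.sub_0_r in X. simpl in X. rewrite H0 in X.
  destruct X as [X0 [X1 [XW XN]]]. repeat split; auto.
Qed.

Lemma RP_inj n p a b i j : RP n p a b -> i <= j -> j <= n -> p i = p j -> i = j.
Proof.
  intros H Hij Hjn E. pose proof (RP_sub n p a b i j H Hij Hjn) as [X0 [X1 [XW XN]]].
  assert (j - i = 0); [|lia]. apply (no_cycle _ _ XW XN). rewrite Nat.add_0_r.
  replace (i + (j - i)) with j by lia. auto.
Qed.

Lemma RP_glue n p m q a b c : RP n p a b -> RP m q b c ->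
  (1 <= n -> 1 <= m -> p (n - 1) <> q 1) -> RP (n + m) (glue n p q) a c.
Proof.
  intros [H0 [H1 [HW HN]]] [K0 [K1 [KW KN]]] J. unfold glue; repeat split.
  - destruct (Nat.leb_spec 0 n); try lia; auto.
  - destruct (Nat.leb_spec (n+m) n).
    + assert (m = 0) by lia. subst m. rewrite Nat.add_0_r. congruence.
    + replace (n + m - n) with m by lia. auto.
  - intros i Hi. destruct (Nat.leb_spec i n); destruct (Nat.leb_spec (S i) n); try lia.
    + apply HW; lia.
    + assert (i = n) by lia. subst i. rewrite H1, <- K0.
      replace (S n - n) with 1 by lia. apply KW; lia.
    + replace (S i - n) with (S (i - n)) by lia. apply KW; lia.
  - intros i Hi. destruct (Nat.leb_spec i n); destruct (Nat.leb_spec (i+2) n); try lia.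
    + apply HN; lia.
    + destruct (Nat.eq_dec i n).
      * subst i. replace (n + 2 - n) with 2 by lia. rewrite H1, <- K0. apply KN; lia.
      * assert (i = n - 1) by lia. subst i. replace (n - 1 + 2 - n) with 1 by lia. apply J; lia.
    + replace (i + 2 - n) with ((i - n) + 2) by lia. apply KN; lia.
Qed.

Lemma RP_map f n p a b : is_aut V adj f -> RP n p a b -> RP n (fun i => f (p i)) (f a) (f b).
Proof.
  intros [HA [HI _]] [H0 [H1 [HW HN]]]. repeat split.
  - congruence.
  - congruence.
  - intros i Hi. apply (proj1 (HA _ _)). apply HW; auto.
  - intros i Hi E. apply HI in E. revert E. apply HN; auto.
Qed.

Definition Half (a c z : V) : Prop := 1 <= gl a z /\ gp a z 1 = c.

Lemma Half_iff n p a c z : RP n p a z -> (Half a c z <-> 1 <= n /\ p 1 = c).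
Proof.
  intros H. destruct (geo_uniq _ _ _ _ H) as [E1 E2]. unfold Half.
  split; intros [X Y]; split; try lia.
  - rewrite E2; auto; lia.
  - rewrite <- E2; auto; lia.
Qed.

Lemma RP_edge a c : adj a c -> RP 1 (consf a (fun _ => c)) a c.
Proof.
  intros H. repeat split; auto. intros i Hi. assert (i = 0) by lia. subst; simpl; auto.
  intros i Hi; lia.
Qed.

Lemma RP_refl a : RP 0 (fun _ => a) a a.
Proof. repeat split; auto; intros i Hi; lia. Qed.

Lemma Half_not_self a c : ~ Half a c a.
Proof. intros H. apply (Half_iff 0 (fun _ => a) a c a (RP_refl a)) in H. lia. Qed.

Lemma Half_nbr a c : adj a c -> Half a c c.
Proof. intros H. apply (Half_iff 1 _ a c c (RP_edge a c H)). simpl; auto. Qed.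

Lemma Half_compl a c z : adj a c -> (Half a c z <-> ~ Half c a z).
Proof.
  intros Hac. pose proof (geo_RP a z) as Hg. revert Hg. generalize (gl a z) (gp a z).
  intros n p Hg. pose proof Hg as [H0 [H1 [HW HN]]].
  destruct (Nat.eq_dec n 0) as [En|En].
  - assert (Ez : z = a) by (rewrite <- H1, En; auto). rewrite Ez in *.
    split; intros X. exfalso; apply (Half_not_self a c X).
    exfalso; apply X. apply (Half_iff 1 _ c a a (RP_edge c a (adj_sym _ _ Hac))). simpl; auto.
  - destruct (classic (p 1 = c)) as [Ep|Ep].
    + assert (Hs : RP (n-1) (shift p) c z).
      { destruct n as [|n']; [lia|]. simpl. rewrite Nat.sub_0_r.
        pose proof (RP_shift n' p a z Hg) as X. rewrite Ep in X. exact X. }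
      split; intros _.
      * intros X. apply (Half_iff _ _ c a z Hs) in X. destruct X as [X1 X2].
        unfold shift in X2. apply (HN 0). lia. simpl. congruence.
      * apply (Half_iff _ _ a c z Hg). split; auto; lia.
    + assert (Hs : RP (S n) (consf c p) c z).
      { apply RP_cons with a; auto. }
      split; intros X.
      * apply (Half_iff _ _ a c z Hg) in X. destruct X; contradiction.
      * exfalso. apply X. apply (Half_iff _ _ c a z Hs). split; [lia|]. simpl; auto.
Qed.

Lemma Half_map f a c z : is_aut V adj f -> (Half a c z <-> Half (f a) (f c) (f z)).
Proof.
  intros Hf. pose proof (geo_RP a z) as Hg. pose proof (RP_map f _ _ _ _ Hf Hg) as Hm.
  rewrite (Half_iff _ _ a c z Hg). rewrite (Half_iff _ _ _ _ _ Hm).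
  destruct Hf as [_ [HI _]]. split; intros [X Y]; split; auto. congruence.
Qed.

Lemma crossing a c u w : adj a c -> adj u w -> ~ Half a c u -> Half a c w -> u = a /\ w = c.
Proof.
  intros Hac Huw Hu Hw. pose proof (geo_RP a u) as Hg. revert Hg. generalize (gl a u) (gp a u).
  intros n p Hg. pose proof Hg as [H0 [H1 [HW HN]]].
  destruct (Nat.eq_dec n 0) as [En|En].
  - assert (Ez : u = a) by (rewrite <- H1, En; auto). rewrite Ez in *. split; auto.
    apply (Half_iff _ _ a c w (RP_edge a w Huw)) in Hw. destruct Hw as [_ Hw]. simpl in Hw. auto.
  - assert (Hp1 : p 1 <> c). { intros E. apply Hu. apply (Half_iff _ _ a c u Hg). split; auto; lia. }
    exfalso.
    destruct (classic (p (n-1) = w)) as [Ew|Ew].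
    + pose proof (RP_prefix _ _ _ _ (n-1) Hg ltac:(lia)) as Hpre. rewrite Ew in Hpre.
      apply (Half_iff _ _ a c w Hpre) in Hw. destruct Hw as [Hw1 Hw2]. apply Hp1; auto.
    + pose proof (RP_glue _ _ _ _ _ _ _ Hg (RP_edge u w Huw)) as Hgl.
      assert (Hgl' : RP (n+1) (glue n p (consf u (fun _ => w))) a w).
      { apply Hgl. intros _ _. simpl. auto. }
      apply (Half_iff _ _ a c w Hgl') in Hw. destruct Hw as [_ Hw2].
      unfold glue in Hw2. destruct (Nat.leb_spec 1 n); try lia. auto.
Qed.

Lemma path_ivt (P : V -> Prop) : forall n p, P (p 0) -> ~ P (p n) ->
  exists j, j < n /\ P (p j) /\ ~ P (p (S j)).
Proof.
  induction n as [|n IH]; intros p H0 Hn. contradiction.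
  destruct (classic (P (p n))) as [X|X].
  - exists n. split; auto.
  - destruct (IH p H0 X) as [j [Hj1 Hj2]]. exists j. split; auto.
Qed.

Lemma Half_convex a c u w n p : adj a c -> Half a c u -> Half a c w -> RP n p u w ->
  forall i, i <= n -> Half a c (p i).
Proof.
  intros Hac Hu Hw Hg i Hi. pose proof Hg as [H0 [H1 [HW HN]]].
  apply NNPP. intros Hpi.
  destruct (path_ivt (Half a c) i p) as [j [Hj [X1 X2]]]. rewrite H0; auto. auto.
  destruct (crossing a c (p (S j)) (p j) Hac) as [E1 E2]; auto.
  apply adj_sym, HW; lia.
  destruct (path_ivt (fun z => ~ Half a c z) (n - i) (fun t => p (i + t))) as [j' [Hj' [Y1 Y2]]].
  simpl. rewrite Nat.add_0_r. auto. replace (i + (n - i)) with n by lia. rewrite H1. auto.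
  apply NNPP in Y2.
  destruct (crossing a c (p (i + j')) (p (i + S j')) Hac) as [F1 F2]; auto.
  replace (i + S j') with (S (i + j')) by lia. apply HW; lia.
  assert (S j = i + j'). { apply (RP_inj n p u w); try lia; auto. congruence. }
  apply (HN j). lia. replace (j + 2) with (i + S j') by lia. congruence.
Qed.

Lemma Half_convex' a c u w z : adj a c -> Half a c u -> Half a c w ->
  (exists i, i <= gl u w /\ gp u w i = z) -> Half a c z.
Proof.
  intros Hac Hu Hw [i [Hi E]]. subst z. apply (Half_convex a c u w (gl u w) (gp u w)); auto.
  apply geo_RP.
Qed.

Lemma Half_tri a c a' c' : adj a c -> adj a' c' -> (exists z, Half a c z /\ Half a' c' z) ->
  (forall z, Half a c z -> Half a' c' z) \/ (forall z, Half a' c' z -> Half a c z) \/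
  (forall z, Half a c z \/ Half a' c' z).
Proof.
  intros Hac Hac' [z0 [Z1 Z2]].
  assert (Hgeo : forall u w, RP (gl u w) (gp u w) u w) by (intros; apply geo_RP).
  destruct (classic (Half a c a' <-> Half a c c')) as [EX|EX].
  2:{ destruct (classic (Half a c c')) as [Y|Y].
      - assert (~ Half a c a') by tauto.
        destruct (crossing a c a' c' Hac Hac' H Y). subst. left; auto.
      - assert (Half a c a') by tauto. exfalso.
        destruct (crossing a c c' a' Hac (adj_sym _ _ Hac') Y H). subst.
        apply (proj1 (Half_compl a c z0 Hac) Z1 Z2). }
  destruct (classic (Half a' c' a <-> Half a' c' c)) as [EY|EY].
  2:{ destruct (classic (Half a' c' c)) as [Y|Y].
      - assert (~ Half a' c' a) by tauto.
        destruct (crossing a' c' a c Hac' Hac H Y). subst. left; auto.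
      - assert (Half a' c' a) by tauto. exfalso.
        destruct (crossing a' c' c a Hac' (adj_sym _ _ Hac) Y H). subst.
        apply (proj1 (Half_compl a' c' z0 Hac') Z2 Z1). }
  destruct (classic (Half a c c')) as [Xc|Xc]; destruct (classic (Half a' c' c)) as [Yc|Yc].
  - right; right. intros z. apply NNPP. intros Hz.
    assert (Ha : ~ Half a c a) by apply Half_not_self.
    assert (HaY : Half a' c' a) by tauto.
    assert (Hca : Half c a a) by (apply (proj2 (Half_compl c a a (adj_sym _ _ Hac))); exact Ha).
    destruct (path_ivt (Half a' c') (gl a z) (gp a z)) as [j [Hj [J1 J2]]].
    destruct (Hgeo a z) as [G0 _]. rewrite G0. auto.
    destruct (Hgeo a z) as [_ [G1 _]]. rewrite G1. tauto.
    destruct (Hgeo a z) as [G0 [G1 [GW GN]]].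
    destruct (crossing a' c' (gp a z (S j)) (gp a z j) Hac') as [E1 E2]; auto.
    try (apply adj_sym, GW; auto).
    assert (Hcz : Half c a z). { apply (proj2 (Half_compl c a z (adj_sym _ _ Hac))). tauto. }
    assert (Half c a (gp a z j)). { apply (Half_convex c a a z (gl a z) (gp a z)); auto; lia. }
    rewrite E2 in H. exact (proj1 (Half_compl a c c' Hac) Xc H).
  - (* a', c' in X; a, c not in Y : Y subset X *) right; left. intros z Hz. apply NNPP. intros Hz'.
    destruct (path_ivt (Half a c) (gl c' z) (gp c' z)) as [j [Hj [J1 J2]]].
    destruct (Hgeo c' z) as [G0 _]. rewrite G0. auto.
    destruct (Hgeo c' z) as [_ [G1 _]]. rewrite G1. auto.
    destruct (Hgeo c' z) as [G0 [G1 [GW GN]]].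
    destruct (crossing a c (gp c' z (S j)) (gp c' z j) Hac) as [E1 E2]; auto.
    try (apply adj_sym, GW; auto).
    apply Yc. rewrite <- E2. apply (Half_convex a' c' c' z (gl c' z) (gp c' z)); auto.
    apply Half_nbr; auto. lia.
  - (* a', c' not in X; a,c in Y : X subset Y *) left. intros z Hz. apply NNPP. intros Hz'.
    destruct (path_ivt (Half a' c') (gl c z) (gp c z)) as [j [Hj [J1 J2]]].
    destruct (Hgeo c z) as [G0 _]. rewrite G0. auto.
    destruct (Hgeo c z) as [_ [G1 _]]. rewrite G1. auto.
    destruct (Hgeo c z) as [G0 [G1 [GW GN]]].
    destruct (crossing a' c' (gp c z (S j)) (gp c z j) Hac') as [E1 E2]; auto.
    try (apply adj_sym, GW; auto).
    apply Xc. rewrite <- E2. apply (Half_convex a c c z (gl c z) (gp c z)); auto.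
    apply Half_nbr; auto. lia.
  - exfalso.
    destruct (path_ivt (Half a' c') (gl z0 c) (gp z0 c)) as [j [Hj [J1 J2]]].
    destruct (Hgeo z0 c) as [G0 _]. rewrite G0. auto.
    destruct (Hgeo z0 c) as [_ [G1 _]]. rewrite G1. auto.
    destruct (Hgeo z0 c) as [G0 [G1 [GW GN]]].
    destruct (crossing a' c' (gp z0 c (S j)) (gp z0 c j) Hac') as [E1 E2]; auto.
    try (apply adj_sym, GW; auto).
    apply Xc. rewrite <- E2. apply (Half_convex a c z0 c (gl z0 c) (gp z0 c)); auto.
    apply Half_nbr; auto. lia.
Qed.

Lemma seg_up l m d : is_line V adj l ->
  RP d (fun i => l (m + Z.of_nat i)%Z) (l m) (l (m + Z.of_nat d)%Z).
Proof.
  intros [HA HI]. repeat split.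
  - f_equal; lia.
  - intros i Hi. replace (m + Z.of_nat (S i))%Z with ((m + Z.of_nat i) + 1)%Z by lia. apply HA.
  - intros i Hi E. apply HI in E. lia.
Qed.

Lemma seg_down l m d : is_line V adj l ->
  RP d (fun i => l (m - Z.of_nat i)%Z) (l m) (l (m - Z.of_nat d)%Z).
Proof.
  intros [HA HI]. repeat split.
  - f_equal; lia.
  - intros i Hi. apply adj_sym. replace (m - Z.of_nat i)%Z with ((m - Z.of_nat (S i)) + 1)%Z by lia. apply HA.
  - intros i Hi E. apply HI in E. lia.
Qed.

Lemma line_half_up l m n : is_line V adj l -> (m < n)%Z -> Half (l m) (l (m+1)%Z) (l n).
Proof.
  intros Hl Hmn. pose proof (seg_up l m (Z.to_nat (n - m)) Hl) as H.
  replace (m + Z.of_nat (Z.to_nat (n - m)))%Z with n in H by lia.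
  apply (Half_iff _ _ _ _ _ H). split. lia. try (f_equal; lia).
Qed.

Lemma line_half_down l m n : is_line V adj l -> (n < m)%Z -> Half (l m) (l (m-1)%Z) (l n).
Proof.
  intros Hl Hmn. pose proof (seg_down l m (Z.to_nat (m - n)) Hl) as H.
  replace (m - Z.of_nat (Z.to_nat (m - n)))%Z with n in H by lia.
  apply (Half_iff _ _ _ _ _ H). split. lia. try (f_equal; lia).
Qed.

Lemma line_nothalf_up l m n : is_line V adj l -> (n <= m)%Z -> ~ Half (l m) (l (m+1)%Z) (l n).
Proof.
  intros Hl Hmn X. destruct (Z.eq_dec n m) as [E|E].
  - subst. apply (Half_not_self _ _ X).
  - apply (proj1 (Half_compl _ _ _ (proj1 Hl m))) in X. apply X.
    pose proof (line_half_down l (m+1) n Hl ltac:(lia)) as Y.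
    replace (m + 1 - 1)%Z with m in Y by lia. exact Y.
Qed.

Lemma line_adj_at l m : is_line V adj l -> adj (l m) (l (m+1)%Z).
Proof. intros [HA _]. apply HA. Qed.

Lemma nat_min {A : Type} (f : A -> nat) (x0 : A) : exists x, forall y, f x <= f y.
Proof.
  assert (H : forall k x, f x = k -> exists x, forall y, f x <= f y).
  { induction k as [k IH] using (well_founded_induction lt_wf). intros x Hx.
    destruct (classic (exists y, f y < k)) as [[y Hy]|N].
    - apply (IH (f y) ltac:(lia) y eq_refl).
    - exists x. intros y. destruct (Nat.le_gt_cases (f x) (f y)); auto. exfalso; apply N; exists y; lia. }
  apply (H (f x0) x0 eq_refl).
Qed.

Definition closest (l : Z -> V) (z : V) (P : Z) := forall n, gl (l P) z <= gl (l n) z.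

Lemma closest_ex l z : exists P, closest l z P.
Proof. apply (nat_min (fun n => gl (l n) z) 0%Z). Qed.

Lemma closest_step l z P : closest l z P -> l P <> z -> 1 <= gl (l P) z /\ forall n, gp (l P) z 1 <> l n.
Proof.
  intros HP Hz. pose proof (geo_RP (l P) z) as Hg. pose proof Hg as [H0 [H1 _]].
  assert (Hn : 1 <= gl (l P) z). { destruct (gl (l P) z) eqn:E; [|lia]. exfalso. apply Hz. rewrite <- H1. auto. }
  split; auto. intros n E.
  destruct (gl (l P) z) as [|k] eqn:Ek; [lia|].
  pose proof (RP_shift k _ _ _ Hg) as Hs. unfold shift in Hs at 1. rewrite E in Hs.
  destruct (geo_uniq _ _ _ _ Hs) as [X _]. specialize (HP n). lia.
Qed.

Lemma closest_front l z P M : is_line V adj l -> closest l z P -> (M < P)%Z ->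
  Half (l M) (l (M+1)%Z) z.
Proof.
  intros Hl HP HM. destruct (classic (l P = z)) as [Ez|Ez].
  - subst z. apply line_half_up; auto.
  - destruct (closest_step l z P HP Ez) as [Hn Hs].
    pose proof (seg_up l M (Z.to_nat (P - M)) Hl) as Hseg.
    replace (M + Z.of_nat (Z.to_nat (P - M)))%Z with P in Hseg by lia.
    pose proof (RP_glue _ _ _ _ _ _ _ Hseg (geo_RP (l P) z)) as Hgl.
    assert (Hgl' : RP (Z.to_nat (P - M) + gl (l P) z) (glue (Z.to_nat (P - M)) (fun i => l (M + Z.of_nat i)%Z) (gp (l P) z)) (l M) z).
    { apply Hgl. intros _ _. apply not_eq_sym. apply Hs. }
    apply (Half_iff _ _ _ _ _ Hgl'). split. lia. unfold glue.
    destruct (Nat.leb_spec 1 (Z.to_nat (P - M))); try lia. f_equal; lia.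
Qed.

Lemma closest_back l z P M : is_line V adj l -> closest l z P -> (P < M)%Z ->
  Half (l M) (l (M-1)%Z) z.
Proof.
  intros Hl HP HM. destruct (classic (l P = z)) as [Ez|Ez].
  - subst z. apply line_half_down; auto.
  - destruct (closest_step l z P HP Ez) as [Hn Hs].
    pose proof (seg_down l M (Z.to_nat (M - P)) Hl) as Hseg.
    replace (M - Z.of_nat (Z.to_nat (M - P)))%Z with P in Hseg by lia.
    pose proof (RP_glue _ _ _ _ _ _ _ Hseg (geo_RP (l P) z)) as Hgl.
    assert (Hgl' : RP (Z.to_nat (M - P) + gl (l P) z) (glue (Z.to_nat (M - P)) (fun i => l (M - Z.of_nat i)%Z) (gp (l P) z)) (l M) z).
    { apply Hgl. intros _ _. apply not_eq_sym. apply Hs. }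
    apply (Half_iff _ _ _ _ _ Hgl'). split. lia. unfold glue.
    destruct (Nat.leb_spec 1 (Z.to_nat (M - P))); try lia. f_equal; lia.
Qed.

Definition RW (r : nat -> V) := (forall n, adj (r n) (r (S n))) /\ (forall n, r n <> r (n+2)).

Lemma RW_RP r n : RW r -> RP n r (r 0) (r n).
Proof. intros [HA HN]. repeat split; auto; intros i _; auto. Qed.

Lemma RW_ray r : RW r -> is_ray V adj r.
Proof.
  intros Hr. split. apply (proj1 Hr). intros m n E.
  destruct (Nat.le_ge_cases m n).
  - apply (RP_inj (max m n) r (r 0) (r (max m n))); auto. apply RW_RP; auto. lia.
  - symmetry. apply (RP_inj (max m n) r (r 0) (r (max m n))); auto. apply RW_RP; auto. lia.
Qed.

Lemma RW_half r k : RW r -> 1 <= k -> Half (r 0) (r 1) (r k).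
Proof. intros Hr Hk. apply (Half_iff _ _ _ _ _ (RW_RP r k Hr)). auto. Qed.

Lemma RW_shift r d : RW r -> RW (fun i => r (d + i)).
Proof.
  intros [HA HN]. split; intros n. replace (d + S n) with (S (d + n)) by lia. apply HA.
  replace (d + (n+2)) with ((d + n) + 2) by lia. apply HN.
Qed.

Section Extend.
Hypothesis NL : forall z u, exists w, adj z w /\ w <> u.
Definition nx (u z : V) : V := proj1_sig (constructive_indefinite_description _ (NL z u)).
Lemma nx_spec u z : adj z (nx u z) /\ nx u z <> u.
Proof. unfold nx. destruct (constructive_indefinite_description _ _). auto. Qed.

Fixpoint st (u0 z0 : V) (k : nat) : V * V :=
  match k with 0 => (u0, z0) | S k => let s := st u0 z0 k in (snd s, nx (fst s) (snd s)) end.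

Lemma extend n p a b : RP n p a b -> 1 <= n -> exists r, RW r /\ forall i, i <= n -> r i = p i.
Proof.
  intros [H0 [H1 [HW HN]]] Hn.
  set (s := st (p (n-1)) (p n)).
  exists (fun i => if i <=? n then p i else snd (s (i - n))). split; [split|].
  - intros i. destruct (Nat.leb_spec i n); destruct (Nat.leb_spec (S i) n); try lia.
    + apply HW; lia.
    + assert (i = n) by lia. subst i. replace (S n - n) with 1 by lia. simpl. apply nx_spec.
    + replace (S i - n) with (S (i - n)) by lia. simpl. apply nx_spec.
  - intros i. destruct (Nat.leb_spec i n); destruct (Nat.leb_spec (i+2) n); try lia.
    + apply HN; lia.
    + destruct (Nat.eq_dec i n).
      * subst i. replace (n + 2 - n) with 2 by lia. simpl. intros E. apply (proj2 (nx_spec (p n) (nx (p (n-1)) (p n)))). auto.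
      * assert (i = n - 1) by lia. subst i. replace (n - 1 + 2 - n) with 1 by lia. simpl.
        intros E. apply (proj2 (nx_spec (p (n-1)) (p n))). auto.
    + replace (i + 2 - n) with (S (S (i - n))) by lia. simpl.
      destruct (i - n) as [|k] eqn:Ek; [lia|]. simpl. intros E.
      set (A := fst (st (p (n - 1)) (p n) k)) in *. set (B := snd (st (p (n - 1)) (p n) k)) in *. apply (proj2 (nx_spec (nx A B) (nx B (nx A B)))). auto.
  - intros i Hi. destruct (Nat.leb_spec i n); try lia. auto.
Qed.
End Extend.

Lemma fix_ray g r : is_aut V adj g -> RW r -> g (r 0) = r 0 ->
  fixes_end V g r -> forall k, g (r k) = r k.
Proof.
  intros Hg Hr H0 [a [b Hab]] k.
  pose proof (RP_map g (a + k) r _ _ Hg (RW_RP r (a+k) Hr)) as X.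
  rewrite H0, Hab in X. pose proof (RW_RP r (b+k) Hr) as Y.
  destruct (rp_uniq _ _ _ _ _ _ X Y) as [E1 E2]. apply E2. lia.
Qed.

Lemma pair_path r1 r2 A B : RW r1 -> RW r2 -> r1 0 = r2 0 -> r1 1 <> r2 1 -> 1 <= A -> 1 <= B ->
  RP (A + B) (glue A (revp A r1) r2) (r1 A) (r2 B).
Proof.
  intros H1 H2 E0 E1 HA HB. apply (RP_glue _ _ _ _ _ (r1 0) _).
  - apply RP_rev. apply RW_RP; auto.
  - rewrite E0. apply RW_RP; auto.
  - intros _ _. unfold revp. replace (A - (A - 1)) with 1 by lia. auto.
Qed.

Lemma pair_eq g r1 r2 : is_aut V adj g -> RW r1 -> RW r2 -> r1 0 = r2 0 -> r1 1 <> r2 1 ->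
  forall a1 b1 a2 b2, (forall n, g (r1 (a1 + n)) = r1 (b1 + n)) ->
  (forall n, g (r2 (a2 + n)) = r2 (b2 + n)) ->
  a1 + a2 = b1 + b2 /\ (a1 = b1 -> g (r1 0) = r1 0).
Proof.
  intros Hg H1 H2 E0 E1 a1 b1 a2 b2 F1 F2.
  pose proof (pair_path r1 r2 (a1 + 1) (a2 + 1) H1 H2 E0 E1 ltac:(lia) ltac:(lia)) as P.
  pose proof (RP_map g _ _ _ _ Hg P) as Q. rewrite F1, F2 in Q.
  pose proof (pair_path r1 r2 (b1 + 1) (b2 + 1) H1 H2 E0 E1 ltac:(lia) ltac:(lia)) as P'.
  destruct (rp_uniq _ _ _ _ _ _ Q P') as [L M]. split. lia.
  intros Eab. subst b1. specialize (M (a1 + 1) ltac:(lia)). unfold glue, revp in M.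
  destruct (Nat.leb_spec (a1+1) (a1+1)); try lia. rewrite Nat.sub_diag in M. auto.
Qed.

Lemma beta g r1 r2 r3 : is_aut V adj g -> RW r1 -> RW r2 -> RW r3 ->
  r1 0 = r2 0 -> r1 0 = r3 0 -> r1 1 <> r2 1 -> r1 1 <> r3 1 -> r2 1 <> r3 1 ->
  fixes_end V g r1 -> fixes_end V g r2 -> fixes_end V g r3 -> g (r1 0) = r1 0.
Proof.
  intros Hg H1 H2 H3 E2 E3 D12 D13 D23 [a1 [b1 F1]] [a2 [b2 F2]] [a3 [b3 F3]].
  destruct (pair_eq g r1 r2 Hg H1 H2 E2 D12 a1 b1 a2 b2 F1 F2) as [X12 Y].
  destruct (pair_eq g r1 r3 Hg H1 H3 E3 D13 a1 b1 a3 b3 F1 F3) as [X13 _].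
  destruct (pair_eq g r2 r3 Hg H2 H3 ltac:(congruence) D23 a2 b2 a3 b3 F2 F3) as [X23 _].
  apply Y. lia.
Qed.

Lemma walk_RP (Sx : V -> Prop) n p a b : RP n p a b -> (forall i, i <= n -> Sx (p i)) -> walk_in V adj Sx a b.
Proof. intros [H0 [H1 [HW _]]] HS. exists n, p. repeat split; auto. Qed.

Lemma walk_trans (Sx : V -> Prop) a b c : walk_in V adj Sx a b -> walk_in V adj Sx b c -> walk_in V adj Sx a c.
Proof.
  intros [n [p [H0 [H1 [HW HS]]]]] [m [q [K0 [K1 [KW KS]]]]].
  exists (n + m), (glue n p q). unfold glue. repeat split.
  - destruct (Nat.leb_spec 0 n); try lia; auto.
  - destruct (Nat.leb_spec (n+m) n).
    + assert (m = 0) by lia. subst m. rewrite Nat.add_0_r. congruence.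
    + replace (n + m - n) with m by lia. auto.
  - intros i Hi. destruct (Nat.leb_spec i n); destruct (Nat.leb_spec (S i) n); try lia.
    + apply HW; lia.
    + assert (i = n) by lia. subst i. rewrite H1, <- K0.
      replace (S n - n) with 1 by lia. apply KW; lia.
    + replace (S i - n) with (S (i - n)) by lia. apply KW; lia.
  - intros i Hi. destruct (Nat.leb_spec i n). apply HS; lia. apply KS; lia.
Qed.

Lemma ray_equiv_sym r r' : ray_equiv V r r' -> ray_equiv V r' r.
Proof. intros [a [b H]]. exists b, a. intros n. symmetry. auto. Qed.

Lemma ray_equiv_trans r r' r'' : ray_equiv V r r' -> ray_equiv V r' r'' -> ray_equiv V r r''.
Proof.
  intros [a [b H]] [c [d K]]. destruct (Nat.le_ge_cases b c).
  - exists (a + (c - b)), d. intros n. rewrite <- K. replace (c + n) with (b + ((c - b) + n)) by lia.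
    rewrite <- H. f_equal. lia.
  - exists a, (d + (b - c)). intros n. rewrite H. replace (b + n) with (c + ((b - c) + n)) by lia.
    rewrite K. f_equal. lia.
Qed.

Lemma line_adj_idx l i j : is_line V adj l -> adj (l i) (l j) -> j = (i + 1)%Z \/ j = (i - 1)%Z.
Proof.
  intros Hl Hadj. destruct (Z.lt_total i j) as [Hij|[Hij|Hij]].
  - pose proof (seg_up l i (Z.to_nat (j - i)) Hl) as H.
    replace (i + Z.of_nat (Z.to_nat (j - i)))%Z with j in H by lia.
    destruct (rp_uniq _ _ _ _ _ _ H (RP_edge _ _ Hadj)) as [E _]. lia.
  - subst. exfalso. apply (adj_irr _ Hadj).
  - pose proof (seg_down l i (Z.to_nat (i - j)) Hl) as H.
    replace (i - Z.of_nat (Z.to_nat (i - j)))%Z with j in H by lia.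
    destruct (rp_uniq _ _ _ _ _ _ H (RP_edge _ _ Hadj)) as [E _]. lia.
Qed.

Lemma Z_ivt (Q : Z -> Prop) m n : Q m -> ~ Q n -> exists j, (Q j /\ ~ Q (j+1)%Z) \/ (~ Q j /\ Q (j+1)%Z).
Proof.
  intros Hm Hn.
  assert (U : forall d : nat, forall m, Q m -> ~ Q (m + Z.of_nat d)%Z -> exists j, Q j /\ ~ Q (j+1)%Z).
  { induction d as [|d IH]; intros m' H1 H2. rewrite Z.add_0_r in H2. contradiction.
    destruct (classic (Q (m' + 1)%Z)) as [X|X].
    - apply (IH (m'+1)%Z X). replace (m' + 1 + Z.of_nat d)%Z with (m' + Z.of_nat (S d))%Z by lia. auto.
    - exists m'. auto. }
  assert (D : forall d : nat, forall m, Q m -> ~ Q (m - Z.of_nat d)%Z -> exists j, ~ Q j /\ Q (j+1)%Z).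
  { induction d as [|d IH]; intros m' H1 H2. rewrite Z.sub_0_r in H2. contradiction.
    destruct (classic (Q (m' - 1)%Z)) as [X|X].
    - apply (IH (m'-1)%Z X). replace (m' - 1 - Z.of_nat d)%Z with (m' - Z.of_nat (S d))%Z by lia. auto.
    - exists (m' - 1)%Z. replace (m' - 1 + 1)%Z with m' by lia. auto. }
  destruct (Z.le_gt_cases m n).
  - destruct (U (Z.to_nat (n - m)) m Hm) as [j Hj]. replace (m + Z.of_nat (Z.to_nat (n - m)))%Z with n by lia. auto.
    exists j; auto.
  - destruct (D (Z.to_nat (m - n)) m Hm) as [j Hj]. replace (m - Z.of_nat (Z.to_nat (m - n)))%Z with n by lia. auto.
    exists j; auto.
Qed.

Lemma line_nested l J M z : is_line V adj l -> (J <= M)%Z -> Half (l M) (l (M+1)%Z) z ->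
  Half (l J) (l (J+1)%Z) z.
Proof.
  intros Hl HJM Hz. destruct (Z.eq_dec J M) as [E|E]. subst; auto.
  pose proof (seg_up l J (Z.to_nat (M - J)) Hl) as Hseg.
  replace (J + Z.of_nat (Z.to_nat (M - J)))%Z with M in Hseg by lia.
  pose proof (geo_RP (l M) z) as Hg. pose proof Hz as [Hz1 Hz2].
  pose proof (RP_glue _ _ _ _ _ _ _ Hseg Hg) as Hgl.
  assert (Hgl' : RP (Z.to_nat (M - J) + gl (l M) z) (glue (Z.to_nat (M - J)) (fun i => l (J + Z.of_nat i)%Z) (gp (l M) z)) (l J) z).
  { apply Hgl. intros _ _. rewrite Hz2. intros X. apply (proj2 Hl) in X. lia. }
  apply (Half_iff _ _ _ _ _ Hgl'). split. lia. unfold glue.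
  destruct (Nat.leb_spec 1 (Z.to_nat (M - J))); try lia. f_equal; lia.
Qed.

Lemma shares_end l l' : is_line V adj l -> is_line V adj l' ->
  (forall M, exists n, ~ Half (l M) (l (M+1)%Z) (l' n)) ->
  ray_equiv V (line_minus V l) (line_plus V l') \/ ray_equiv V (line_minus V l) (line_minus V l').
Proof.
  intros Hl Hl' HM.
  destruct (closest_ex l (l' 0%Z)) as [P HP].
  assert (Hin : forall t : nat, exists s, l' s = l (P - 1 - Z.of_nat t)%Z /\ l' s <> l (P - Z.of_nat t)%Z -> True) by (intros; exists 0%Z; auto).
  clear Hin.
  assert (Hon : forall M, (M < P)%Z -> exists s, l' s = l M).
  { intros M HMP. destruct (HM M) as [n Hn].
    pose proof (closest_front l (l' 0%Z) P M Hl HP HMP) as H0.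
    destruct (Z_ivt (fun s => Half (l M) (l (M+1)%Z) (l' s)) 0%Z n H0 Hn) as [j [[J1 J2]|[J1 J2]]].
    - destruct (crossing (l M) (l (M+1)%Z) (l' (j+1)%Z) (l' j) (proj1 Hl M)) as [E1 E2]; auto.
      apply adj_sym, (proj1 Hl').
      exists (j+1)%Z. auto.
    - destruct (crossing (l M) (l (M+1)%Z) (l' j) (l' (j+1)%Z) (proj1 Hl M)) as [E1 E2]; auto.
      apply (proj1 Hl'). exists j. auto. }
  assert (Hon' : forall t : nat, exists s, l' s = l (P - 1 - Z.of_nat t)%Z).
  { intros t. apply Hon. lia. }
  set (sg := fun t => proj1_sig (constructive_indefinite_description _ (Hon' t))).
  assert (Hsg : forall t, l' (sg t) = l (P - 1 - Z.of_nat t)%Z).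
  { intros t. unfold sg. destruct (constructive_indefinite_description _ _). auto. }
  assert (Hstep : forall t, sg (S t) = (sg t + 1)%Z \/ sg (S t) = (sg t - 1)%Z).
  { intros t. apply (line_adj_idx l'); auto. rewrite Hsg, Hsg.
    replace (P - 1 - Z.of_nat t)%Z with ((P - 1 - Z.of_nat (S t)) + 1)%Z by lia. apply adj_sym, (proj1 Hl). }
  assert (Hne : forall t, sg (S (S t)) <> sg t).
  { intros t E. assert (X : l' (sg (S (S t))) = l' (sg t)) by congruence. rewrite Hsg, Hsg in X.
    apply (proj2 Hl) in X. lia. }
  set (e := (sg (S O) - sg O)%Z).
  assert (He : e = 1%Z \/ e = (-1)%Z) by (unfold e; destruct (Hstep 0); lia).
  assert (Hlin : forall t, sg t = (sg O + e * Z.of_nat t)%Z).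
  { assert (forall t, sg (S t) = (sg t + e)%Z /\ sg t = (sg O + e * Z.of_nat t)%Z).
    { induction t as [|t [IH1 IH2]].
      - unfold e. split; lia.
      - split; [|lia]. destruct (Hstep (S t)) as [X|X]; rewrite X.
        + destruct He as [He|He]; [lia|]. exfalso. apply (Hne t). lia.
        + destruct He as [He|He]; [|lia]. exfalso. apply (Hne t). lia. }
    intros t; apply H. }
  set (A := Z.to_nat (Z.abs P + Z.abs (sg O) + 1)).
  destruct He as [He|He].
  - left. exists A, (Z.to_nat (sg O + Z.of_nat A + P - 1)). intros n. unfold line_minus, line_plus.
    pose proof (Hsg (Z.to_nat (Z.of_nat A + Z.of_nat n + P - 1))) as X.
    rewrite Hlin in X. rewrite He in X.
    replace (P - 1 - Z.of_nat (Z.to_nat (Z.of_nat A + Z.of_nat n + P - 1)))%Z with (- Z.of_nat (A + n))%Z in X by lia.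
    rewrite <- X. f_equal. lia.
  - right. exists A, (Z.to_nat (Z.of_nat A + P - 1 - sg O)). intros n. unfold line_minus.
    pose proof (Hsg (Z.to_nat (Z.of_nat A + Z.of_nat n + P - 1))) as X.
    rewrite Hlin in X. rewrite He in X.
    replace (P - 1 - Z.of_nat (Z.to_nat (Z.of_nat A + Z.of_nat n + P - 1)))%Z with (- Z.of_nat (A + n))%Z in X by lia.
    rewrite <- X. f_equal. lia.
Qed.

Lemma geo_map g a b : is_aut V adj g -> gl (g a) (g b) = gl a b /\
  forall i, i <= gl a b -> gp (g a) (g b) i = g (gp a b i).
Proof.
  intros Hg. destruct (geo_uniq _ _ _ _ (RP_map g _ _ _ _ Hg (geo_RP a b))) as [E1 E2].
  split; auto. intros i Hi. symmetry. auto.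
Qed.

Section Grp.
Variable G : (V -> V) -> Prop.
Hypothesis HG : is_aut_subgroup V adj G.
Hypothesis Hmin : minimal_action V adj G.
Hypothesis Hgt : general_type V adj G.

Lemma G_aut g : G g -> is_aut V adj g.
Proof. intros; apply HG; auto. Qed.
Lemma G_inv g : G g -> exists h, G h /\ forall v, h (g v) = v /\ g (h v) = v.
Proof. intros; apply HG; auto. Qed.
Lemma G_comp g h : G g -> G h -> G (fun v => g (h v)).
Proof. intros; apply HG; auto. Qed.
Lemma G_id : G (fun v => v).
Proof. apply HG. Qed.
Lemma G_iter B N : G B -> G (Nat.iter N B).
Proof.
  intros HB. induction N as [|N IH]. exact G_id.
  exact (G_comp B (Nat.iter N B) HB IH).
Qed.

Lemma min_all (Sx : V -> Prop) : (exists v, Sx v) -> (forall u v, Sx u -> Sx v -> walk_in V adj Sx u v) ->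
  (forall g v, G g -> Sx v -> Sx (g v)) -> forall v, Sx v.
Proof.
  intros H1 H2 H3 v. apply NNPP. intros Hv. apply Hmin. exists Sx. split; [split; auto|split; eauto].
Qed.

Definition Ax l := exists b, G b /\ is_axis V adj b l.

Lemma Ax_line l : Ax l -> is_line V adj l.
Proof. intros [b [_ [H _]]]; auto. Qed.

Lemma aut_line g l : is_aut V adj g -> is_line V adj l -> is_line V adj (fun n => g (l n)).
Proof.
  intros [HA [HI _]] [LA LI]. split.
  - intros n. apply (proj1 (HA _ _)). apply LA.
  - intros m n E. apply LI. apply HI. auto.
Qed.

Lemma Ax_conj g l : G g -> Ax l -> Ax (fun n => g (l n)).
Proof.
  intros Hg [b [Hb [Hl [k [Hk Hbk]]]]]. destruct (G_inv g Hg) as [h [Hh Hgh]].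
  exists (fun v => g (b (h v))). split.
  - apply G_comp; auto. apply G_comp; auto.
  - split. apply aut_line; auto. apply G_aut; auto.
    exists k. split; auto. intros n. rewrite (proj1 (Hgh _)). rewrite Hbk. auto.
Qed.

Lemma Ax_ex : exists l, Ax l.
Proof. destruct Hgt as [g1 [g2 [c1 [c2 [H1 [H2 [A1 _]]]]]]]. exists c1, g1. auto. Qed.

Lemma line_nbrs l n : is_line V adj l -> adj (l n) (l (n+1)%Z) /\ adj (l n) (l (n-1)%Z) /\ l (n+1)%Z <> l (n-1)%Z.
Proof.
  intros [LA LI]. split; [apply LA|split].
  - apply adj_sym. pose proof (LA (n-1)%Z) as X. replace (n - 1 + 1)%Z with n in X by lia. auto.
  - intros E. apply LI in E. lia.
Qed.

Lemma no_leaf : forall z u, exists w, adj z w /\ w <> u.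
Proof.
  set (Sx := fun z => exists u w, adj z u /\ adj z w /\ u <> w).
  assert (HS : forall z, Sx z).
  { apply min_all.
    - destruct Ax_ex as [l Hl]. apply Ax_line in Hl. exists (l 0%Z).
      destruct (line_nbrs l 0%Z Hl) as [X [Y Z]]. exists (l (0+1)%Z), (l (0-1)%Z). auto.
    - intros u v Hu Hv. apply (walk_RP Sx (gl u v) (gp u v) u v (geo_RP u v)).
      intros i Hi. destruct (geo_RP u v) as [G0 [G1 [GW GN]]].
      destruct (Nat.eq_dec i 0). subst i. rewrite G0; auto.
      destruct (Nat.eq_dec i (gl u v)). subst i. rewrite G1; auto.
      exists (gp u v (i - 1)), (gp u v (S i)). split; [|split].
      + apply adj_sym. pose proof (GW (i - 1) ltac:(lia)) as X. replace (S (i - 1)) with i in X by lia. auto.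
      + apply GW. lia.
      + replace (S i) with ((i - 1) + 2) by lia. apply GN. lia.
    - intros g v Hg [u [w [X [Y Z]]]]. destruct (G_aut g Hg) as [HA [HI _]].
      exists (g u), (g w). split; [|split]. apply (proj1 (HA _ _)); auto. apply (proj1 (HA _ _)); auto.
      intros E. apply Z. apply HI; auto. }
  intros z u. destruct (HS z) as [x [w [X [Y Z]]]].
  destruct (classic (x = u)). subst. exists w; auto. exists x; auto.
Qed.

Lemma hull : forall z, exists l1 l2 m1 m2 i, Ax l1 /\ Ax l2 /\ i <= gl (l1 m1) (l2 m2) /\
  gp (l1 m1) (l2 m2) i = z.
Proof.
  apply min_all.
  - destruct Ax_ex as [l Hl]. exists (l 0%Z), l, l, 0%Z, 0%Z, 0. repeat split; auto. lia.
    destruct (geo_RP (l 0%Z) (l 0%Z)) as [G0 _]; auto.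
  - intros u v [l1 [l2 [m1 [m2 [i [A1 [A2 [Hi Ei]]]]]]]] [l1' [l2' [m1' [m2' [i' [A1' [A2' [Hi' Ei']]]]]]]].
    assert (Hon : forall la lb ma mb, Ax la -> Ax lb -> forall k, k <= gl (la ma) (lb mb) ->
      exists l1 l2 m1 m2 i, Ax l1 /\ Ax l2 /\ i <= gl (l1 m1) (l2 m2) /\ gp (l1 m1) (l2 m2) i = gp (la ma) (lb mb) k).
    { intros la lb ma mb Ha Hb k Hk. exists la, lb, ma, mb, k. auto. }
    apply walk_trans with (l1 m1).
    + pose proof (RP_rev _ _ _ _ (RP_prefix _ _ _ _ i (geo_RP (l1 m1) (l2 m2)) Hi)) as R.
      rewrite Ei in R.
      apply (walk_RP _ _ _ _ _ R). intros k Hk. unfold revp. apply Hon; auto. lia.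
    + apply walk_trans with (l1' m1').
      * apply (walk_RP _ _ _ _ _ (geo_RP (l1 m1) (l1' m1'))). intros k Hk.
        exists l1, l1', m1, m1', k. auto.
      * pose proof (RP_prefix _ _ _ _ i' (geo_RP (l1' m1') (l2' m2')) Hi') as R.
        rewrite Ei' in R.
        apply (walk_RP _ _ _ _ _ R). intros k Hk. apply Hon; auto. lia.
  - intros g v Hg [l1 [l2 [m1 [m2 [i [A1 [A2 [Hi Ei]]]]]]]].
    exists (fun n => g (l1 n)), (fun n => g (l2 n)), m1, m2, i.
    destruct (geo_map g (l1 m1) (l2 m2) (G_aut g Hg)) as [E1 E2].
    split; [apply Ax_conj; auto|split; [apply Ax_conj; auto|]]. rewrite E1. split; auto.
    rewrite E2; auto. congruence.
Qed.

Lemma Ax_pos l : Ax l -> exists b K, G b /\ (K > 0)%Z /\ forall n, b (l n) = l (n + K)%Z.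
Proof.
  intros [b [Hb [Hl [k [Hk Hbk]]]]]. destruct (Z_lt_le_dec 0 k).
  - exists b, k. split; auto. split; [lia|auto].
  - destruct (G_inv b Hb) as [h [Hh Hbh]]. exists h, (- k)%Z. split; auto. split. lia.
    intros n. rewrite <- (proj1 (Hbh (l (n + - k)%Z))). rewrite Hbk. f_equal. f_equal. lia.
Qed.

Lemma Ax_rev l : Ax l -> Ax (fun n => l (- n)%Z).
Proof.
  intros [b [Hb [[LA LI] [k [Hk Hbk]]]]]. exists b. split; auto. split; [split|].
  - intros n. apply adj_sym. pose proof (LA (- (n + 1))%Z) as X. replace (- (n + 1) + 1)%Z with (- n)%Z in X by lia. exact X.
  - intros m n E. apply LI in E. lia.
  - exists (- k)%Z. split. lia. intros n. rewrite Hbk. f_equal. lia.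
Qed.

Lemma iter_line (B : V -> V) (K : Z) (l : Z -> V) (N : nat) (n : Z) : (forall n, B (l n) = l (n + K)%Z) -> Nat.iter N B (l n) = l (n + Z.of_nat N * K)%Z.
Proof.
  intros HB. induction N as [|N IH]. simpl. f_equal; lia.
  change (Nat.iter (S N) B (l n)) with (B (Nat.iter N B (l n))). rewrite IH. rewrite HB. f_equal. lia.
Qed.

Lemma AX a c : adj a c -> exists l, Ax l /\ forall n, Half a c (l n).
Proof.
  intros Hac.
  destruct (hull c) as [l1 [l2 [m1 [m2 [i [A1 [A2 [Hi Ei]]]]]]]].
  assert (Hmeet : exists l m, Ax l /\ Half a c (l m)).
  { apply NNPP. intros N.
    assert (X1 : Half c a (l1 m1)). { apply (proj2 (Half_compl c a _ (adj_sym _ _ Hac))). intros X. apply N. eauto. }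
    assert (X2 : Half c a (l2 m2)). { apply (proj2 (Half_compl c a _ (adj_sym _ _ Hac))). intros X. apply N. eauto. }
    apply (Half_not_self c a). rewrite <- Ei at 2.
    apply (Half_convex c a (l1 m1) (l2 m2) _ _ (adj_sym _ _ Hac) X1 X2 (geo_RP _ _)). auto. }
  destruct Hmeet as [l [m [Al Hlm]]].
  destruct (classic (forall n, Half a c (l n))) as [All|NAll]. exists l; auto.
  apply not_all_ex_not in NAll. destruct NAll as [n' Hn'].
  assert (Hnorm : exists L J, Ax L /\ L J = a /\ L (J+1)%Z = c).
  { destruct (Z_ivt (fun s => Half a c (l s)) m n' Hlm Hn') as [j [[J1 J2]|[J1 J2]]].
    - destruct (crossing a c (l (j+1)%Z) (l j) Hac) as [E1 E2]; auto.
      apply adj_sym, (proj1 (Ax_line l Al)).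
      exists (fun s => l (- s)%Z), (- (j + 1))%Z. split. apply Ax_rev; auto.
      split. rewrite Z.opp_involutive. auto. replace (- (- (j + 1) + 1))%Z with j by lia. auto.
    - destruct (crossing a c (l j) (l (j+1)%Z) Hac) as [E1 E2]; auto.
      apply (proj1 (Ax_line l Al)). exists l, j. auto. }
  destruct Hnorm as [L [J [AL [LJ LJ1]]]].
  pose proof (Ax_line L AL) as HL.
  destruct (Ax_pos L AL) as [B [K [HB [HK HBK]]]].
  destruct Hgt as [g1 [g2 [c1 [c2 [Hg1 [Hg2 [Ac1 [Ac2 Hends]]]]]]]].
  assert (Hc : exists l', Ax l' /\ ~ ray_equiv V (line_minus V L) (line_plus V l') /\
                                  ~ ray_equiv V (line_minus V L) (line_minus V l')).
  { apply NNPP. intros N.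
    assert (N1 : ray_equiv V (line_minus V L) (line_plus V c1) \/ ray_equiv V (line_minus V L) (line_minus V c1)).
    { apply NNPP. intros X. apply N. exists c1. split. exists g1; auto. tauto. }
    assert (N2 : ray_equiv V (line_minus V L) (line_plus V c2) \/ ray_equiv V (line_minus V L) (line_minus V c2)).
    { apply NNPP. intros X. apply N. exists c2. split. exists g2; auto. tauto. }
    destruct N1 as [N1|N1]; destruct N2 as [N2|N2];
    (eapply Hends; [ | | eapply ray_equiv_trans; [apply ray_equiv_sym; exact N1|exact N2]]);
    solve [left; reflexivity | right; reflexivity]. }
  destruct Hc as [l' [Al' [Hp Hm]]].
  assert (HM : exists M, forall n, Half (L M) (L (M+1)%Z) (l' n)).
  { apply NNPP. intros N. destruct (shares_end L l' HL (Ax_line l' Al')) as [X|X]; auto.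
    intros M. apply NNPP. intros Y. apply N. exists M. intros n. apply NNPP. intros Z. apply Y. eauto. }
  destruct HM as [M HM].
  set (N := Z.to_nat (Z.abs (J - M))).
  exists (fun s => Nat.iter N B (l' s)). split.
  - apply Ax_conj; auto. apply G_iter; auto.
  - intros s. rewrite <- LJ, <- LJ1. apply line_nested with (M + Z.of_nat N * K)%Z; auto.
    unfold N. nia.
    pose proof (proj1 (Half_map (Nat.iter N B) _ _ _ (G_aut _ (G_iter B N HB))) (HM s)) as X.
    rewrite !(iter_line B K L N) in X; auto. replace (M + 1 + Z.of_nat N * K)%Z with (M + Z.of_nat N * K + 1)%Z in X by lia.
    auto.
Qed.

Lemma rev_second n p a b : RP n p a b -> 1 <= n -> revp n p (n - 1) = p 1.
Proof. intros _ H. unfold revp. f_equal. lia. Qed.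

Lemma half_path_avoid n p a c v : RP n p a (p n) -> 1 <= n -> p 1 = c -> ~ Half a c v -> a <> v ->
  forall i, i <= n -> p i <> v.
Proof.
  intros H Hn Hc Hv Hav i Hi E. destruct (Nat.eq_dec i 0).
  - subst i. destruct H as [H0 _]. congruence.
  - apply Hv. rewrite <- E. pose proof (RP_prefix _ _ _ _ i H Hi) as X.
    apply (Half_iff _ _ _ _ _ X). split; [lia|auto].
Qed.

Lemma config g : G g -> fix_has_interior V adj g ->
  exists l b K n3 p3, is_line V adj l /\ G b /\ (K > 0)%Z /\ (forall n, b (l n) = l (n+K)%Z) /\
    adj (l n3) p3 /\ (forall n, p3 <> l n) /\ (forall z, ~ Half (l n3) p3 z -> g z = z).
Proof.
  intros HgG [U [HUo [[r0 [Hr0 HUr0]] HUfix]]].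
  destruct (HUo r0 Hr0 HUr0) as [v Hv].
  pose proof (G_aut g HgG) as Hga.
  pose proof no_leaf as NL.
  assert (Hm0 : exists m0, forall k, m0 <= k -> r0 k <> v).
  { destruct (classic (exists j, r0 j = v)) as [[j Hj]|N].
    - exists (S j). intros k Hk E. assert (k = j) by (apply (proj2 Hr0); congruence). lia.
    - exists 0. intros k _ E. apply N. eauto. }
  destruct Hm0 as [m0 Hm0]. set (z0 := r0 m0).
  assert (Hz0 : z0 <> v) by (apply Hm0; lia).
  assert (Rfix : forall r, RW r -> walk_in V adj (fun x => x <> v) z0 (r 0) -> (forall k, r k <> v) -> fixes_end V g r).
  { intros r Hr Hw Hk. apply HUfix. apply RW_ray; auto. apply Hv. apply RW_ray; auto.
    exists m0, 0. split; [auto|split; auto]. }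
  assert (Hd0 : 1 <= gl v z0).
  { destruct (geo_RP v z0) as [G0 [G1 _]]. destruct (gl v z0) eqn:E; [|lia]. exfalso. apply Hz0. rewrite <- G1, G0. auto. }
  set (q := gp v z0 1).
  assert (Hvq : adj v q). { destruct (geo_RP v z0) as [G0 [_ [GW _]]]. rewrite <- G0 at 1. apply GW. lia. }
  assert (walkC : forall z, Half v q z -> walk_in V adj (fun x => x <> v) z0 z).
  { intros z Hz. apply walk_trans with q.
    - pose proof (RP_rev _ _ _ _ (RP_sub _ _ _ _ 1 (gl v z0) (geo_RP v z0) Hd0 (le_n _))) as R.
      destruct (geo_RP v z0) as [G0 [G1 _]]. rewrite G1 in R.
      apply (walk_RP _ _ _ _ _ R). intros i Hi. unfold revp. intros E. cbv beta in E.
      assert (X : 0 = 1 + (gl v z0 - 1 - i)).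
      { apply (RP_inj _ _ _ _ 0 (1 + (gl v z0 - 1 - i)) (geo_RP v z0)); try lia. rewrite G0, E. auto. }
      lia.
    - pose proof Hz as [Hz1 Hz2].
      pose proof (RP_sub _ _ _ _ 1 (gl v z) (geo_RP v z) Hz1 (le_n _)) as R.
      destruct (geo_RP v z) as [G0 [G1 _]]. rewrite G1, Hz2 in R.
      apply (walk_RP _ _ _ _ _ R). intros i Hi E. cbv beta in E.
      assert (X : 0 = 1 + i).
      { apply (RP_inj _ _ _ _ 0 (1 + i) (geo_RP v z)); try lia. rewrite G0, E. auto. }
      lia. }
  destruct (AX v q Hvq) as [l1 [A1 H1]]. pose proof (Ax_line _ A1) as L1.
  destruct (closest_ex l1 v) as [n1 Hn1].
  assert (Hl1v : l1 n1 <> v). { intros E. apply (Half_not_self v q). rewrite <- E at 2. auto. }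
  destruct (closest_step l1 v n1 Hn1 Hl1v) as [Hd1 Hp1].
  set (p1 := gp (l1 n1) v 1) in *.
  set (pi1 := l1 n1) in *. set (e := l1 (n1 + 1)%Z).
  assert (Hpe : adj pi1 e) by apply (proj1 L1).
  assert (Hve : ~ Half pi1 e v).
  { intros X. apply (Half_iff _ _ _ _ _ (geo_RP pi1 v)) in X. destruct X as [_ X]. apply (Hp1 (n1+1)%Z). auto. }
  destruct (AX pi1 e Hpe) as [l2 [A2 H2]]. pose proof (Ax_line _ A2) as L2.
  destruct (closest_ex l2 pi1) as [n2 Hn2].
  set (y := l2 n2) in *.
  assert (Hypi : y <> pi1). { intros E. apply (Half_not_self pi1 e). rewrite <- E at 2. apply H2. }
  destruct (closest_step l2 pi1 n2 Hn2 Hypi) as [Hd2 Hp2].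
  set (p2 := gp y pi1 1) in *.
  set (d := gl pi1 y).
  assert (HyH : Half pi1 e y) by apply H2.
  pose proof HyH as [Hd Hde].
  fold d in Hd, Hde.
  assert (Gpy : RP d (gp pi1 y) pi1 y) by apply geo_RP.
  set (R := revp d (gp pi1 y)).
  assert (HR : RP d R y pi1) by (apply RP_rev; auto).
  assert (HR1 : R 1 = p2).
  { destruct (geo_uniq _ _ _ _ HR) as [E1 E2]. rewrite E2. auto. lia. }
  assert (HRe : R (d - 1) = e).
  { unfold R, revp. replace (d - (d - 1)) with 1 by lia. auto. }
  assert (HRv : forall i, i <= d -> R i <> v).
  { intros i Hi. unfold R, revp. apply (half_path_avoid d (gp pi1 y) pi1 e v);
    [rewrite (proj1 (proj2 Gpy)); exact Gpy | lia | exact Hde | exact Hve | exact Hl1v | lia]. }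
  assert (Hyv : y <> v). { destruct HR as [X _]. rewrite <- X. apply HRv. lia. }
  assert (walkY : walk_in V adj (fun x => x <> v) z0 y).
  { apply walk_trans with pi1. apply walkC. apply H1.
    apply (walk_RP _ _ _ _ _ Gpy). intros i Hi. apply (half_path_avoid d (gp pi1 y) pi1 e v);
    [rewrite (proj1 (proj2 Gpy)); exact Gpy | lia | exact Hde | exact Hve | exact Hl1v | lia]. }
  assert (Hl2v : forall n, l2 n <> v). { intros n E. apply Hve. rewrite <- E. apply H2. }
  set (ra := fun k : nat => l2 (n2 + Z.of_nat k)%Z).
  set (rb := fun k : nat => l2 (n2 - Z.of_nat k)%Z).
  assert (RWa : RW ra).
  { split. intros k. unfold ra. replace (n2 + Z.of_nat (S k))%Z with ((n2 + Z.of_nat k) + 1)%Z by lia. apply (proj1 L2).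
    intros k E. unfold ra in E. apply (proj2 L2) in E. lia. }
  assert (RWb : RW rb).
  { split. intros k. unfold rb. apply adj_sym.
    pose proof (proj1 L2 (n2 - Z.of_nat (S k))%Z) as X. replace (n2 - Z.of_nat (S k) + 1)%Z with (n2 - Z.of_nat k)%Z in X by lia. auto.
    intros k E. unfold rb in E. apply (proj2 L2) in E. lia. }
  pose proof (RP_glue _ _ _ _ _ _ _ HR (RP_edge pi1 (l1 (n1 - 1)%Z) (proj1 (proj2 (line_nbrs l1 n1 L1))))) as Lc.
  assert (Lc' : RP (d + 1) (glue d R (consf pi1 (fun _ => l1 (n1 - 1)%Z))) y (l1 (n1 - 1)%Z)).
  { apply Lc. intros _ _. rewrite HRe. simpl. intros E. apply (proj2 L1) in E. lia. }
  destruct (extend NL _ _ _ _ Lc' ltac:(lia)) as [rc [RWc Hrc]].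
  assert (rc0 : rc 0 = y). { rewrite Hrc; [|lia]. destruct Lc' as [X _]. auto. }
  assert (rc1 : rc 1 = p2). { rewrite Hrc; [|lia]. unfold glue. destruct (Nat.leb_spec 1 d); try lia. auto. }
  assert (rcd : rc d = pi1). { rewrite Hrc; [|lia]. unfold glue. destruct (Nat.leb_spec d d); try lia. destruct HR as [_ [X _]]. auto. }
  assert (rcd1 : rc (d + 1) = l1 (n1 - 1)%Z). { rewrite Hrc; [|lia]. unfold glue. destruct (Nat.leb_spec (d+1) d); try lia.
    replace (d + 1 - d) with 1 by lia. auto. }
  assert (Hrcv : forall k, rc k <> v).
  { intros k. destruct (Nat.le_gt_cases k d).
    - rewrite Hrc; [|lia]. unfold glue. destruct (Nat.leb_spec k d); try lia. apply HRv; auto.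
    - pose proof (RW_half _ (k - d) (RW_shift rc d RWc) ltac:(lia)) as X.
      simpl in X. rewrite Nat.add_0_r in X.
      replace (d + (k - d)) with k in X by lia. rewrite rcd, rcd1 in X.
      intros E. rewrite E in X. apply (Half_iff _ _ _ _ _ (geo_RP pi1 v)) in X. destruct X as [_ X].
      apply (Hp1 (n1 - 1)%Z). auto. }
  assert (Hgy : g y = y).
  { assert (ra0 : ra 0 = y) by (unfold ra; simpl; rewrite Z.add_0_r; auto).
    assert (rb0 : rb 0 = y) by (unfold rb; simpl; rewrite Z.sub_0_r; auto).
    rewrite <- ra0 at 2. rewrite <- ra0.
    apply (beta g ra rb rc Hga RWa RWb RWc); try congruence.
    - unfold ra, rb. intros E. apply (proj2 L2) in E. lia.
    - rewrite rc1. apply not_eq_sym. apply Hp2.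
    - rewrite rc1. apply not_eq_sym. apply Hp2.
    - apply Rfix; auto. rewrite ra0; auto. intros k; apply Hl2v.
    - apply Rfix; auto. rewrite rb0; auto. intros k; apply Hl2v.
    - apply Rfix; auto. rewrite rc0; auto. }
  set (c := l2 (n2 + 1)%Z).
  assert (Hyc : adj y c) by apply (proj1 L2).
  assert (Hvc : ~ Half y c v).
  { pose proof (RP_glue _ _ _ _ _ _ _ HR (geo_RP pi1 v)) as X.
    assert (X' : RP (d + gl pi1 v) (glue d R (gp pi1 v)) y v).
    { apply X. intros _ _. rewrite HRe. intros E. apply (Hp1 (n1+1)%Z). auto. }
    intros Y. apply (Half_iff _ _ _ _ _ X') in Y. destruct Y as [_ Y]. unfold glue in Y.
    destruct (Nat.leb_spec 1 d); try lia. rewrite HR1 in Y. apply (Hp2 (n2 + 1)%Z). auto. }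
  assert (Hfixc : forall z, Half y c z -> g z = z).
  { intros z Hz. pose proof Hz as [Hz1 Hz2].
    destruct (extend NL _ _ _ _ (geo_RP y z) Hz1) as [r [RWr Hr]].
    assert (rr0 : r 0 = y). { rewrite Hr; [|lia]. destruct (geo_RP y z) as [X _]. auto. }
    assert (rr1 : r 1 = c). { rewrite Hr; [|lia]. auto. }
    assert (Hrz : r (gl y z) = z). { rewrite Hr; [|lia]. destruct (geo_RP y z) as [_ [X _]]. auto. }
    rewrite <- Hrz. apply (fix_ray g r Hga RWr). congruence.
    apply Rfix; auto. rewrite rr0; auto.
    intros k E. destruct (Nat.eq_dec k 0). subst k. congruence.
    apply Hvc. rewrite <- E, <- rr0, <- rr1. apply RW_half; auto. lia. }
  destruct (AX y c Hyc) as [l3 [A3 H3]]. pose proof (Ax_line _ A3) as L3.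
  destruct (Ax_pos l3 A3) as [b [K [Hb [HK HbK]]]].
  destruct (closest_ex l3 y) as [n3 Hn3].
  assert (Hqy : l3 n3 <> y). { intros E. apply (Half_not_self y c). rewrite <- E at 2. apply H3. }
  destruct (closest_step l3 y n3 Hn3 Hqy) as [Hd3 Hp3].
  set (p3 := gp (l3 n3) y 1) in *.
  exists l3, b, K, n3, p3. split; auto. split; auto. split; auto. split; auto. split.
  { destruct (geo_RP (l3 n3) y) as [G0 [_ [GW _]]]. rewrite <- G0 at 1. apply GW. lia. }
  split; auto.
  intros z Hz. apply Hfixc. apply NNPP. intros Hz'. apply Hz.
  pose proof (H3 n3) as Hq. pose proof Hq as [Hq1 Hq2].
  set (d3 := gl y (l3 n3)) in *.
  assert (R3 : RP d3 (revp d3 (gp y (l3 n3))) (l3 n3) y) by (apply RP_rev, geo_RP).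
  assert (R3a : revp d3 (gp y (l3 n3)) 1 = p3).
  { destruct (geo_uniq _ _ _ _ R3) as [E1 E2]. rewrite E2. auto. lia. }
  pose proof (RP_glue _ _ _ _ _ _ _ R3 (geo_RP y z)) as X.
  assert (X' : RP (d3 + gl y z) (glue d3 (revp d3 (gp y (l3 n3))) (gp y z)) (l3 n3) z).
  { apply X. intros _ Hyz. unfold revp. replace (d3 - (d3 - 1)) with 1 by lia. rewrite Hq2.
    intros E. apply Hz'. apply (Half_iff _ _ _ _ _ (geo_RP y z)). split; auto. }
  apply (Half_iff _ _ _ _ _ X'). split. lia. unfold glue. destruct (Nat.leb_spec 1 d3); try lia. auto.
Qed.

Lemma tri_ext (X X' Y : V -> Prop) : (forall z, X z <-> X' z) -> tri X' Y -> tri X Y.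
Proof.
  intros E [H|[H|H]]; unfold tri.
  - left. intros z Hz. apply H, E; auto.
  - right; left. intros z Hz. apply E; auto.
  - right; right. intros z. destruct (H z); [left; apply E|right]; auto.
Qed.

Lemma main_G : (exists g, G g /\ nontriv V g /\ fix_has_interior V adj g) ->
  satisfies_nontrivial_mixed_identity V G.
Proof.
  intros [g [HgG [Hnt Hfix]]].
  destruct (config g HgG Hfix) as [l [b [K [n3 [p3 [L [Hb [HK [HbK [Hadj [Hp3 Hsupp]]]]]]]]]]].
  destruct (G_inv g HgG) as [g' [Hg' Hgg']].
  destruct (G_inv b Hb) as [b' [Hb' Hbb']].
  pose proof (G_aut g HgG) as Ag. pose proof (G_aut b Hb) as Ab.
  set (q := l n3) in *.
  set (f2 := fun v => b (g (b' v))). set (f2' := fun v => b (g' (b' v))).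
  set (S := fun v => b (b v)). set (S' := fun v => b' (b' v)).
  assert (I1 : inv2 g g') by (intros z; split; apply Hgg').
  assert (Ib : inv2 b b') by (intros z; split; apply Hbb').
  assert (I2 : inv2 f2 f2'). { intros z; unfold f2, f2'; split.
    rewrite (proj1 (Hbb' _)), (proj2 (Hgg' _)), (proj2 (Hbb' _)). auto.
    rewrite (proj1 (Hbb' _)), (proj1 (Hgg' _)), (proj2 (Hbb' _)). auto. }
  assert (IS : inv2 S S'). { intros z; unfold S, S'; split.
    rewrite !(proj2 (Hbb' _)). auto. rewrite !(proj1 (Hbb' _)). auto. }
  assert (HbK' : forall n, b' (l n) = l (n - K)%Z).
  { intros n. rewrite <- (proj1 (Hbb' (l (n - K)%Z))). rewrite HbK. f_equal. f_equal. lia. }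
  assert (Hlinj : forall m n, l m = l n -> m = n) by apply L.
  assert (Hqn : forall n, ~ Half q p3 (l n)).
  { intros n X. destruct (Z.lt_total n3 n) as [E|[E|E]].
    - pose proof (seg_up l n3 (Z.to_nat (n - n3)) L) as P.
      replace (n3 + Z.of_nat (Z.to_nat (n - n3)))%Z with n in P by lia.
      apply (Half_iff _ _ _ _ _ P) in X. destruct X as [_ X]. apply (Hp3 (n3 + Z.of_nat 1)%Z). auto.
    - subst n. apply (Half_not_self _ _ X).
    - pose proof (seg_down l n3 (Z.to_nat (n3 - n)) L) as P.
      replace (n3 - Z.of_nat (Z.to_nat (n3 - n)))%Z with n in P by lia.
      apply (Half_iff _ _ _ _ _ P) in X. destruct X as [_ X]. apply (Hp3 (n3 - Z.of_nat 1)%Z). auto. }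
  assert (Fg : forall n, g (l n) = l n) by (intros; apply Hsupp; apply Hqn).
  assert (Fg' : forall n, g' (l n) = l n) by (intros; rewrite <- (Fg n) at 1; apply Hgg').
  assert (Ff2 : forall n, f2 (l n) = l n).
  { intros n. unfold f2. rewrite HbK', Fg, HbK. f_equal. lia. }
  assert (Ff2' : forall n, f2' (l n) = l n).
  { intros n. unfold f2'. rewrite HbK', Fg', HbK. f_equal. lia. }
  destruct Hnt as [v0 Hv0].
  assert (N1 : nontriv V g) by (exists v0; auto).
  assert (N1' : nontriv V g') by (exists v0; intros E; apply Hv0; rewrite <- E at 1; apply Hgg').
  assert (N2 : nontriv V f2).
  { exists (b v0). unfold f2. rewrite (proj1 (Hbb' _)). intros E. apply (proj1 (proj2 Ab)) in E. auto. }
  assert (N2' : nontriv V f2').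
  { exists (b v0). unfold f2'. rewrite (proj1 (Hbb' _)). intros E. apply (proj1 (proj2 Ab)) in E.
    apply Hv0. rewrite <- E at 1. apply Hgg'. }
  set (H1 := Half q p3). set (H2 := Half (b q) (b p3)).
  assert (Hbq : b q = l (n3 + K)%Z) by apply HbK.
  assert (supp2 : forall z, ~ H2 z -> f2 z = z).
  { intros z Hz. unfold f2. rewrite Hsupp. apply Hbb'. intros X. apply Hz.
    unfold H2. pose proof (proj1 (Half_map b q p3 (b' z) Ab) X) as Y. rewrite (proj2 (Hbb' z)) in Y. exact Y. }
  assert (Hbp3 : forall n, b p3 <> l n).
  { intros n E. apply (Hp3 (n - K)%Z). rewrite <- HbK'. rewrite <- E. symmetry. apply Hbb'. }
  assert (H2q : forall z, H2 z -> 1 <= Z.to_nat K -> (forall w, H1 w -> False) -> True) by auto.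
  assert (Dq : forall w, Half q p3 w -> ~ H2 w).
  { intros w Hw X. unfold H2 in X. rewrite Hbq in X.
    pose proof (seg_down l (n3 + K)%Z (Z.to_nat K) L) as P.
    replace (n3 + K - Z.of_nat (Z.to_nat K))%Z with n3 in P by lia.
    pose proof (RP_glue _ _ _ _ _ _ _ P (geo_RP q w)) as Pg.
    assert (Pg' : RP (Z.to_nat K + gl q w) (glue (Z.to_nat K) (fun i => l (n3 + K - Z.of_nat i)%Z) (gp q w)) (l (n3 + K)%Z) w).
    { apply Pg. intros _ _. destruct Hw as [_ Hw]. rewrite Hw. intros E. apply (Hp3 (n3 + K - Z.of_nat (Z.to_nat K - 1))%Z). auto. }
    apply (Half_iff _ _ _ _ _ Pg') in X. destruct X as [_ X]. unfold glue in X.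
    destruct (Nat.leb_spec 1 (Z.to_nat K)); try lia. apply (Hbp3 (n3 + K - Z.of_nat 1)%Z). auto. }
  assert (DB : forall z, ~ (H1 z /\ H2 z)) by (intros z [X Y]; apply (Dq z X Y)).
  assert (H2qq : ~ H2 q).
  { intros X. unfold H2 in X. rewrite Hbq in X.
    pose proof (seg_down l (n3 + K)%Z (Z.to_nat K) L) as P.
    replace (n3 + K - Z.of_nat (Z.to_nat K))%Z with n3 in P by lia.
    apply (Half_iff _ _ _ _ _ P) in X. destruct X as [_ X]. apply (Hbp3 (n3 + K - Z.of_nat 1)%Z). auto. }
  assert (Hadj2 : adj (b q) (b p3)) by (apply (proj1 (proj1 Ab _ _)); auto).
  exists g, (wl V g g' f2 f2' b b' S S').
  split; auto. split.
  { apply wl_in. exact G_comp. exact HgG. exact Hg'.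
    exact (G_comp b _ Hb (G_comp g b' HgG Hb')). exact (G_comp b _ Hb (G_comp g' b' Hg' Hb')).
    exact Hb. exact Hb'. exact (G_comp b b Hb Hb). exact (G_comp b' b' Hb' Hb'). }
  split.
  { apply (wl_reduced _ _ _ _ _ _ _ _ _ l K); auto.
    - intros n. unfold S. rewrite HbK, HbK. f_equal. lia.
    - intros n. unfold S'. rewrite HbK', HbK'. f_equal. lia. }
  split. { left. unfold wl. discriminate. }
  intros h hi Gh Ghi Hinv v. rewrite eval_wl. apply Wd_id; [exact I1|exact I2|exact Ib|exact IS| intros z; apply Hinv | ].
  pose proof (G_aut h Gh) as Ah. pose proof (G_aut hi Ghi) as Ahi.
  set (A1 := fun w => H1 (hi w)). set (A2 := fun w => H2 (hi w)).
  assert (EA : forall a c w, Half a c (hi w) <-> Half (h a) (h c) w).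
  { intros a c w. rewrite (Half_map h a c (hi w) Ah). rewrite (proj1 (Hinv w)). tauto. }
  assert (Tgen : forall a c (B : V -> Prop) a' c', adj a c -> adj a' c' -> (forall z, B z <-> Half a' c' z) ->
            meets (fun w => Half a c (hi w)) B -> tri (fun w => Half a c (hi w)) B).
  { intros a c B a' c' Hac Hac' EB [z [Z1 Z2]].
    apply (tri_ext _ (Half (h a) (h c))). intros w; apply EA.
    assert (tri (Half (h a) (h c)) (Half a' c')) as X.
    { apply Half_tri; auto. apply (proj1 (proj1 Ah _ _)); auto. exists z. split. apply EA; auto. apply EB; auto. }
    destruct X as [X|[X|X]]; unfold tri.
    - left. intros w Hw. apply EB. auto.
    - right; left. intros w Hw. apply X, EB. auto.
    - right; right. intros w. destruct (X w); [left|right]; auto. apply EB; auto. }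
  assert (Hc := comb A1 A2 H1 H2
    (Tgen q p3 H1 q p3 Hadj Hadj (fun z => iff_refl _))
    (Tgen q p3 H2 (b q) (b p3) Hadj Hadj2 (fun z => iff_refl _))
    (Tgen (b q) (b p3) H1 q p3 Hadj2 Hadj (fun z => iff_refl _))
    (Tgen (b q) (b p3) H2 (b q) (b p3) Hadj2 Hadj2 (fun z => iff_refl _))
    (ex_intro _ p3 (Half_nbr _ _ Hadj)) (ex_intro _ (b p3) (Half_nbr _ _ Hadj2))
    (fun z => DB (hi z)) DB (ex_intro _ q (conj (Half_not_self q p3) H2qq))).
  assert (Inj : forall F, is_aut V adj F -> forall u w, cj h hi F u = cj h hi F w -> u = w).
  { intros F AF u w E. unfold cj in E. apply (proj1 (proj2 Ah)) in E. apply (proj1 (proj2 AF)) in E.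
    rewrite <- (proj1 (Hinv u)), <- (proj1 (Hinv w)). congruence. }
  assert (SuppX : forall F (P : V -> Prop), (forall z, ~ P z -> F z = z) -> forall z, ~ P (hi z) -> cj h hi F z = z).
  { intros F P HF z Hz. unfold cj. rewrite HF; auto. apply Hinv. }
  assert (Af2 : is_aut V adj f2). { apply G_aut. exact (G_comp b _ Hb (G_comp g b' HgG Hb')). }
  assert (CM : forall F Fi (Bj Ai : V -> Prop), is_aut V adj F -> is_aut V adj Fi ->
     (forall z, ~ Bj z -> F z = z) -> (forall z, ~ Ai z -> Fi z = z) -> ~ meets (fun w => Ai (hi w)) Bj ->
     comm F (cj h hi Fi)).
  { intros F Fi Bj Ai AF AFi HF HFi NM. apply (comm_disj F (cj h hi Fi) Bj (fun w => Ai (hi w))); auto.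
    apply SuppX; auto. intros z [X Y]. apply NM. exists z. auto.
    apply (proj1 (proj2 AF)). apply Inj; auto. }
  destruct Hc as [X|[X|[X|X]]].
  - left. apply (CM g g H1 H1); auto.
  - right; right; left. apply (CM f2 g H2 H1); auto.
  - right; left. apply (CM g f2 H1 H2); auto.
  - right; right; right. apply (CM f2 f2 H2 H2); auto.
Qed.

End Grp.

End Tree.


Theorem proposition3p7 (V : Type) (adj : V -> V -> Prop)
  (G : (V -> V) -> Prop) :
  is_tree V adj ->
  is_aut_subgroup V adj G ->
  minimal_action V adj G ->
  general_type V adj G ->
  ~ topologically_free V adj G ->
  satisfies_nontrivial_mixed_identity V G.
Proof.
  intros [Hinh [Hsym [Hirr [Hconn Hacyc]]]] HG Hmin Hgt Hntf.
  eapply main_G; eauto.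
  apply NNPP. intros N. apply Hntf. intros g Hg Hn Hf. apply N. exists g. auto.
Qed.
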